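(* A $\mathtt{dCBN}$ term $M$ is $\mathtt{dCBN}$-meaningful if and only if $\mathrm{nf}(\mathcal T^n(M))\neq\emptyset$.
   Context: \textbf{dCBN.} Terms $M,N::=x\mid\lambda x.M\mid MN\mid M[N/x]$ ($M[N/x]$ explicit substitution binding $x$, $M\{N/x\}$ capture-avoiding substitution); list contexts $L::=\square\mid L[N/x]$. $\to_n$ is the closure under all contexts of $L\langle\lambda x.M\rangle N\mapsto L\langle M[N/x]\rangle$ and $M[N/x]\mapsto M\{N/x\}$. Testing contexts $T::=\square\mid TN\mid(\lambda x.T)N$. $M$ is $\mathtt{dCBN}$-meaningful if there is a testing context $T$ with $T\langle M\rangle\to_n^*\lambda x.x$. \textbf{Resource calculus.} Resource terms $m,n::=x\mid\lambda x.m\mid mn\mid m[n/x]\mid\mathrm{der}\,m\mid[m_1,\dots,m_k]$ ($k\ge0$ multisets); $l::=\square\mid l[n/x]$. Reduction (to a resource term or zero $\emptyset$), closed under all contexts: $\mathrm{der}(l\langle[m]\rangle)\to l\langle m\rangle$; $\mathrm{der}(l\langle[m_1,\dots,m_k]\rangle)\to\emptyset$ if $k\ne1$; $l\langle\lambda x.m\rangle n\to l\langle m[n/x]\rangle$; $m[l\langle[n_1,\dots,n_k]\rangle/x]\to l\langle m\{n_{\sigma(1)}/x_1,\dots,n_{\sigma(k)}/x_k\}\rangle$ for each permutation $\sigma$ when $x_1,\dots,x_k$ are exactly the free occurrences of $x$ in $m$, else $\to\emptyset$. \textbf{dCBN Taylor expansion.} $x\sqsubset_n x$; $\lambda x.m\sqsubset_n\lambda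 x.M$ if $m\sqsubset_n M$; $m[n_1,\dots,n_k]\sqsubset_n MN$ and $m[[n_1,\dots,n_k]/x]\sqsubset_n M[N/x]$ ($k\ge0$) if $m\sqsubset_n M$ and all $n_i\sqsubset_n N$. $\mathcal T^n(M)=\{m\mid m\sqsubset_n M\}$; $\mathrm{nf}(\mathcal T^n(M))$ is the set of normal resource terms $p$ with $m\to^*p$ for some $m\in\mathcal T^n(M)$. *)

(* Defs.v *)
(* Terms are represented with de Bruijn indices
   (alpha-equivalence is syntactic equality). *)
From Stdlib Require Import List Arith Relations Permutation.
Import ListNotations.

Inductive term : Type :=
| Var : nat -> term
| Lam : term -> term
| App : term -> term -> term
| ES  : term -> term -> term.   (* ES M N = M[N/x], binds index 0 in M *)

Fixpoint lift (c k : nat) (t : term) : term :=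
  match t with
  | Var i => if i <? c then Var i else Var (i + k)
  | Lam t => Lam (lift (S c) k t)
  | App t u => App (lift c k t) (lift c k u)
  | ES t u => ES (lift (S c) k t) (lift c k u)
  end.

Fixpoint subst (j : nat) (N : term) (t : term) : term :=
  match t with
  | Var i => if i <? j then Var i
             else if i =? j then lift 0 j N
             else Var (i - 1)
  | Lam t => Lam (subst (S j) N t)
  | App t u => App (subst j N t) (subst j N u)
  | ES t u => ES (subst (S j) N t) (subst j N u)
  end.

(* list contexts L ::= [] | L[N/x]; the head of the list is the outermost
   explicit substitution *)
Fixpoint plugL (L : list term) (t : term) : term :=
  match L with
  | [] => t
  | N :: L' => ES (plugL L' t) N
  end.

Inductive nstep : term -> term -> Prop :=
| n_dB (L : list term) (M N : term) :
    nstep (App (plugL L (Lam M)) N) (plugL L (ES M (lift 0 (length L) N)))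
| n_s (M N : term) : nstep (ES M N) (subst 0 N M)
| n_lam M M' : nstep M M' -> nstep (Lam M) (Lam M')
| n_appl M M' N : nstep M M' -> nstep (App M N) (App M' N)
| n_appr M N N' : nstep N N' -> nstep (App M N) (App M N')
| n_esl M M' N : nstep M M' -> nstep (ES M N) (ES M' N)
| n_esr M N N' : nstep N N' -> nstep (ES M N) (ES M N').

Definition nsteps : term -> term -> Prop := clos_refl_trans term nstep.

(* testing contexts T ::= [] | T N | (\x.T) N; plugging may capture *)
Inductive tctx : Type :=
| THole : tctx
| TApp : tctx -> term -> tctx
| TLamApp : tctx -> term -> tctx.

Fixpoint plugT (T : tctx) (M : term) : term :=
  match T with
  | THole => M
  | TApp T N => App (plugT T M) N
  | TLamApp T N => App (Lam (plugT T M)) N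
  end.

Definition meaningful (M : term) : Prop :=
  exists T : tctx, nsteps (plugT T M) (Lam (Var 0)).

Inductive rterm : Type :=
| rvar : nat -> rterm
| rlam : rterm -> rterm
| rapp : rterm -> rterm -> rterm
| res  : rterm -> rterm -> rterm        (* m[n/x], binds index 0 in m *)
| rder : rterm -> rterm
| rbag : list rterm -> rterm.           (* multiset [m1,...,mk], as a list *)

Fixpoint rlift (c k : nat) (t : rterm) : rterm :=
  match t with
  | rvar i => if i <? c then rvar i else rvar (i + k)
  | rlam t => rlam (rlift (S c) k t)
  | rapp t u => rapp (rlift c k t) (rlift c k u)
  | res t u => res (rlift (S c) k t) (rlift c k u)
  | rder t => rder (rlift c k t)
  | rbag ts => rbag (map (rlift c k) ts)
  end.

Fixpoint occ (d : nat) (t : rterm) : nat :=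
  match t with
  | rvar i => if i =? d then 1 else 0
  | rlam t => occ (S d) t
  | rapp t u => occ d t + occ d u
  | res t u => occ (S d) t + occ d u
  | rder t => occ d t
  | rbag ts => list_sum (map (occ d) ts)
  end.

(* linear substitution: [lsub d K m ns m'] holds when m' is obtained from m
   by replacing its free occurrences of the variable x (index d at depth d),
   taken from left to right, by the elements of ns in order (each used
   exactly once), where the ns live in a scope with K extra binders
   (those of the list context l), and the other free variables of m are
   re-indexed accordingly (x removed, K binders added). *)
Inductive lsub : nat -> nat -> rterm -> list rterm -> rterm -> Prop :=
| ls_bound d K i : i < d -> lsub d K (rvar i) [] (rvar i)
| ls_hit d K n : lsub d K (rvar d) [n] (rlift 0 d n)
| ls_free d K i : d < i -> lsub d K (rvar i) [] (rvar (i - 1 + K))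
| ls_lam d K m ns m' : lsub (S d) K m ns m' -> lsub d K (rlam m) ns (rlam m')
| ls_app d K m n ns1 ns2 m' n' :
    lsub d K m ns1 m' -> lsub d K n ns2 n' ->
    lsub d K (rapp m n) (ns1 ++ ns2) (rapp m' n')
| ls_es d K m n ns1 ns2 m' n' :
    lsub (S d) K m ns1 m' -> lsub d K n ns2 n' ->
    lsub d K (res m n) (ns1 ++ ns2) (res m' n')
| ls_der d K m ns m' : lsub d K m ns m' -> lsub d K (rder m) ns (rder m')
| ls_bag d K ms ns ms' : lsubs d K ms ns ms' -> lsub d K (rbag ms) ns (rbag ms')
with lsubs : nat -> nat -> list rterm -> list rterm -> list rterm -> Prop :=
| lss_nil d K : lsubs d K [] [] []
| lss_cons d K m ms ns1 ns2 m' ms' :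
    lsub d K m ns1 m' -> lsubs d K ms ns2 ms' ->
    lsubs d K (m :: ms) (ns1 ++ ns2) (m' :: ms').

(* resource list contexts l ::= [] | l[n/x] (head = outermost) *)
Fixpoint rplug (l : list rterm) (t : rterm) : rterm :=
  match l with
  | [] => t
  | n :: l' => res (rplug l' t) n
  end.

(* root rules; [None] is the zero (empty sum) *)
Inductive rbase : rterm -> option rterm -> Prop :=
| r_der1 l m : rbase (rder (rplug l (rbag [m]))) (Some (rplug l m))
| r_der0 l ms : length ms <> 1 -> rbase (rder (rplug l (rbag ms))) None
| r_beta l m n :
    rbase (rapp (rplug l (rlam m)) n)
          (Some (rplug l (res m (rlift 0 (length l) n))))
| r_subst l m ns ns' m' :
    Permutation ns ns' -> lsub 0 (length l) m ns' m' ->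
    rbase (res m (rplug l (rbag ns))) (Some (rplug l m'))
| r_subst0 l m ns : occ 0 m <> length ns ->
    rbase (res m (rplug l (rbag ns))) None.

(* closure under all contexts (zero is absorbing) *)
Inductive rstep : rterm -> option rterm -> Prop :=
| rs_base m r : rbase m r -> rstep m r
| rs_lam m r : rstep m r -> rstep (rlam m) (option_map rlam r)
| rs_appl m n r : rstep m r -> rstep (rapp m n) (option_map (fun m' => rapp m' n) r)
| rs_appr m n r : rstep n r -> rstep (rapp m n) (option_map (fun n' => rapp m n') r)
| rs_esl m n r : rstep m r -> rstep (res m n) (option_map (fun m' => res m' n) r)
| rs_esr m n r : rstep n r -> rstep (res m n) (option_map (fun n' => res m n') r)
| rs_der m r : rstep m r -> rstep (rder m) (option_map rder r)
| rs_bag ms1 m ms2 r : rstep m r ->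
    rstep (rbag (ms1 ++ m :: ms2))
          (option_map (fun m' => rbag (ms1 ++ m' :: ms2)) r).

Definition rsteps : rterm -> rterm -> Prop :=
  clos_refl_trans rterm (fun a b => rstep a (Some b)).

Definition rnormal (p : rterm) : Prop := forall r, ~ rstep p r.

Inductive taylor : rterm -> term -> Prop :=
| t_var i : taylor (rvar i) (Var i)
| t_lam m M : taylor m M -> taylor (rlam m) (Lam M)
| t_app m ns M N : taylor m M -> (forall n, In n ns -> taylor n N) ->
    taylor (rapp m (rbag ns)) (App M N)
| t_es m ns M N : taylor m M -> (forall n, In n ns -> taylor n N) ->
    taylor (res m (rbag ns)) (ES M N).

Definition nf_taylor (M : term) (p : rterm) : Prop :=
  rnormal p /\ exists m, taylor m M /\ rsteps m p.

(* Main.v *)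
Require Import Defs.
From Stdlib Require Import List Arith Relations Permutation Lia Setoid Morphisms Classical.
Import ListNotations.


Ltac nat_cases := repeat match goal with
  | |- context [?a <? ?b] => destruct (Nat.ltb_spec a b)
  | |- context [?a =? ?b] => destruct (Nat.eqb_spec a b)
  end.

Lemma lift_0 : forall t c, lift c 0 t = t.
Proof. induction t; intros; simpl; try (f_equal; auto).
  nat_cases; f_equal; lia. Qed.

Lemma lift_comm : forall t c d j k, d <= c ->
  lift (c + j) k (lift d j t) = lift d j (lift c k t).
Proof. induction t; intros; simpl.
  - nat_cases; simpl; nat_cases; f_equal; lia.
  - f_equal. replace (S (c + j)) with (S c + j) by lia. apply IHt; lia.
  - f_equal; auto.
  - f_equal; auto. replace (S (c + j)) with (S c + j) by lia. apply IHt1; lia.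
Qed.

Lemma lift_comp : forall t c d j a, c <= d -> d <= c + j ->
  lift d a (lift c j t) = lift c (j + a) t.
Proof. induction t; intros; simpl.
  - nat_cases; simpl; nat_cases; f_equal; lia.
  - f_equal. apply IHt; lia.
  - f_equal; auto.
  - f_equal; auto. apply IHt1; lia.
Qed.

Lemma subst_lift : forall t c d k X, c <= d -> d <= c + k ->
  subst d X (lift c (S k) t) = lift c k t.
Proof. induction t; intros; simpl.
  - nat_cases; simpl; nat_cases; f_equal; lia.
  - f_equal. apply IHt; lia.
  - f_equal; auto.
  - f_equal; auto. apply IHt1; lia.
Qed.

Lemma subst_lift2 : forall t j d a N, d <= j ->
  subst (a + j) N (lift d a t) = lift d a (subst j N t).
Proof. induction t; intros; simpl.
  - nat_cases; simpl; nat_cases; try (f_equal; lia).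
    rewrite lift_comp by lia. f_equal. lia.
  - f_equal. replace (S (a + j)) with (a + S j) by lia. apply IHt; lia.
  - f_equal; auto.
  - f_equal; auto. replace (S (a + j)) with (a + S j) by lia. apply IHt1; lia.
Qed.

Lemma lift_subst : forall M j c k N,
  lift (j + c) k (subst j N M) = subst j (lift c k N) (lift (S (j + c)) k M).
Proof. induction M; intros; simpl.
  - nat_cases; simpl; nat_cases; try (f_equal; lia).
    rewrite Nat.add_comm. apply lift_comm; lia.
  - f_equal. apply (IHM (S j)).
  - f_equal; auto.
  - f_equal; auto. apply (IHM1 (S j)).
Qed.

Lemma subst_subst : forall M d j N N2,
  subst (d + j) N (subst d N2 M) = subst d (subst j N N2) (subst (S (d + j)) N M).
Proof. induction M; intros; simpl.
  - nat_cases; simpl; nat_cases; try (f_equal; lia).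
    + apply (subst_lift2 N2 j 0 d N); lia.
    + rewrite subst_lift by lia. reflexivity.
  - f_equal. apply (IHM (S d)).
  - f_equal; auto.
  - f_equal; auto. apply (IHM1 (S d)).
Qed.

Fixpoint liftL (c k : nat) (L : list term) : list term :=
  match L with [] => [] | N :: L' => lift c k N :: liftL (S c) k L' end.
Fixpoint substL (j : nat) (N : term) (L : list term) : list term :=
  match L with [] => [] | P :: L' => subst j N P :: substL (S j) N L' end.

Lemma liftL_length : forall L c k, length (liftL c k L) = length L.
Proof. induction L; simpl; auto. Qed.
Lemma substL_length : forall L j N, length (substL j N L) = length L.
Proof. induction L; simpl; auto. Qed.

Lemma lift_plugL : forall L c k X,
  lift c k (plugL L X) = plugL (liftL c k L) (lift (c + length L) k X).
Proof. induction L; intros; simpl. rewrite Nat.add_0_r; auto.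
  f_equal. rewrite IHL. f_equal. f_equal. lia. Qed.

Lemma subst_plugL : forall L j N X,
  subst j N (plugL L X) = plugL (substL j N L) (subst (j + length L) N X).
Proof. induction L; intros; simpl. rewrite Nat.add_0_r; auto.
  f_equal. rewrite IHL. f_equal. f_equal. lia. Qed.

Lemma nstep_dB' : forall L L' M N X Y, L' = L -> X = M -> Y = lift 0 (length L) N ->
  nstep (App (plugL L (Lam M)) N) (plugL L' (ES X Y)).
Proof. intros; subst; constructor. Qed.

Lemma nstep_lift : forall M M', nstep M M' -> forall c k, nstep (lift c k M) (lift c k M').
Proof. induction 1; intros; simpl; try (constructor; auto; fail).
  - rewrite !lift_plugL. simpl. apply nstep_dB'; auto.
    rewrite liftL_length. replace (c + length L) with (c + length L) by lia.
    rewrite (lift_comm N c 0 (length L) k) by lia. reflexivity.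
  - pose proof (lift_subst M 0 c k N) as E; simpl in E; rewrite E. constructor.
Qed.

Lemma nstep_subst : forall M M', nstep M M' -> forall j N, nstep (subst j N M) (subst j N M').
Proof. induction 1; intros; simpl; try (constructor; auto; fail).
  - rewrite !subst_plugL. simpl. apply nstep_dB'; auto.
    rewrite substL_length.
    replace (j + length L) with (length L + j) by lia.
    rewrite (subst_lift2 N j 0 (length L) N0) by lia. reflexivity.
  - pose proof (subst_subst M 0 j N0 N) as E; simpl in E; rewrite E. constructor.
Qed.

Lemma nsteps_ctx : forall (f : term -> term), (forall a b, nstep a b -> nstep (f a) (f b)) ->
  forall a b, nsteps a b -> nsteps (f a) (f b).
Proof. intros f Hf a b H. induction H.
  - apply rt_step; auto.
  - apply rt_refl.
  - eapply rt_trans; eauto. Qed.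

Lemma nsteps_lam : forall a b, nsteps a b -> nsteps (Lam a) (Lam b).
Proof. apply nsteps_ctx; intros; constructor; auto. Qed.
Lemma nsteps_appl : forall N a b, nsteps a b -> nsteps (App a N) (App b N).
Proof. intro N; apply (nsteps_ctx (fun x => App x N)); intros; constructor; auto. Qed.
Lemma nsteps_appr : forall M a b, nsteps a b -> nsteps (App M a) (App M b).
Proof. intro M; apply (nsteps_ctx (fun x => App M x)); intros; constructor; auto. Qed.
Lemma nsteps_esl : forall N a b, nsteps a b -> nsteps (ES a N) (ES b N).
Proof. intro N; apply (nsteps_ctx (fun x => ES x N)); intros; constructor; auto. Qed.
Lemma nsteps_esr : forall M a b, nsteps a b -> nsteps (ES M a) (ES M b).
Proof. intro M; apply (nsteps_ctx (fun x => ES M x)); intros; constructor; auto. Qed.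
Lemma nsteps_plugT : forall T a b, nsteps a b -> nsteps (plugT T a) (plugT T b).
Proof. induction T; intros; simpl; auto.
  - apply nsteps_appl; auto.
  - apply nsteps_appl, nsteps_lam; auto. Qed.
Lemma nsteps_lift : forall c k a b, nsteps a b -> nsteps (lift c k a) (lift c k b).
Proof. intros c k. apply (nsteps_ctx (lift c k)). intros; apply nstep_lift; auto. Qed.
Lemma nsteps_subst : forall j N a b, nsteps a b -> nsteps (subst j N a) (subst j N b).
Proof. intros j N. apply (nsteps_ctx (subst j N)). intros; apply nstep_subst; auto. Qed.
Lemma nsteps_trans : forall a b c, nsteps a b -> nsteps b c -> nsteps a c.
Proof. intros; eapply rt_trans; eauto. Qed.
Lemma nsteps_step : forall a b, nstep a b -> nsteps a b.
Proof. intros; apply rt_step; auto. Qed.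


Fixpoint comp (T2 T1 : tctx) : tctx :=
  match T2 with
  | THole => T1
  | TApp T N => TApp (comp T T1) N
  | TLamApp T N => TLamApp (comp T T1) N
  end.
Lemma plugT_comp : forall T2 T1 X, plugT (comp T2 T1) X = plugT T2 (plugT T1 X).
Proof. induction T2; intros; simpl; try rewrite IHT2; auto. Qed.

Lemma meaningful_back : forall T X Y, nsteps (plugT T X) Y -> meaningful Y -> meaningful X.
Proof. intros T X Y H [T2 H2]. exists (comp T2 T). rewrite plugT_comp.
  eapply nsteps_trans. apply nsteps_plugT; eauto. auto. Qed.

Lemma meaningful_red : forall X Y, nsteps X Y -> meaningful Y -> meaningful X.
Proof. intros. apply (meaningful_back THole X Y); auto. Qed.

Fixpoint lamn (n : nat) (t : term) : term :=
  match n with 0 => t | S n => Lam (lamn n t) end.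

Definition E (k : nat) := lamn (S k) (Var 0).

Lemma lift_E : forall k c j, lift c j (E k) = E k.
Proof. unfold E. induction k; intros; simpl. reflexivity.
  simpl in IHk. rewrite IHk. reflexivity. Qed.
Lemma subst_E : forall k c N, subst c N (E k) = E k.
Proof. unfold E. induction k; intros; simpl. reflexivity.
  simpl in IHk. rewrite IHk. reflexivity. Qed.

Arguments E : simpl never.

Lemma subst_lamn : forall n t j N, subst j N (lamn n t) = lamn n (subst (n + j) N t).
Proof. induction n; intros; simpl; auto. f_equal. rewrite IHn. f_equal. f_equal. lia. Qed.

Inductive sp (h : term) : nat -> term -> Prop :=
| sp0 : sp h 0 h
| spS k H N : sp h k H -> sp h (S k) (App H N).

Lemma sp_subst : forall h k H, sp h k H -> forall j N, sp (subst j N h) k (subst j N H).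
Proof. induction 1; intros; simpl; constructor; auto. Qed.

Lemma beta_E : forall N k, nsteps (App (Lam (E k)) N) (E k).
Proof. intros. eapply nsteps_trans. apply nsteps_step.
  apply (n_dB [] (E k) N). simpl. apply nsteps_step.
  pose proof (n_s (E k) (lift 0 0 N)) as H. rewrite subst_E in H. auto. Qed.


Lemma sp_red : forall k H a, sp (lamn (S a + k) (Var 0)) k H -> nsteps H (lamn (S a) (Var 0)).
Proof. intros k H a Hs. remember (lamn (S a + k) (Var 0)) as h. revert a Heqh.
  induction Hs; intros a Eq; subst.
  - rewrite Nat.add_0_r. apply rt_refl.
  - eapply nsteps_trans. apply nsteps_appl. apply (IHHs (S a)). f_equal. lia.
    simpl. change (Lam (lamn a (Var 0))) with (lamn (S a) (Var 0)).
    pose proof (beta_E N a) as B. unfold E in B. exact B.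
Qed.

Inductive ne : term -> Prop :=
| ne_var i : ne (Var i)
| ne_app H N : ne H -> ne (App H N).
Inductive hnf : term -> Prop :=
| hnf_ne H : ne H -> hnf H
| hnf_lam H : hnf H -> hnf (Lam H).

Lemma ne_sp : forall H, ne H -> exists i k, sp (Var i) k H.
Proof. induction 1. exists i, 0; constructor.
  destruct IHne as (i & k & HS). exists i, (S k). constructor; auto. Qed.
Lemma hnf_sp : forall H, hnf H -> exists n i k H0, H = lamn n H0 /\ sp (Var i) k H0.
Proof. induction 1.
  - destruct (ne_sp H H0) as (i & k & HS). exists 0, i, k, H. auto.
  - destruct IHhnf as (n & i & k & H1 & -> & HS). exists (S n), i, k, H1. auto. Qed.

Lemma good_meaningful : forall n h k H0, sp h k H0 -> (h = E k \/ exists i, h = Var i) ->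
  meaningful (lamn n H0).
Proof.
  induction n; intros h k H0 Hs Hh; simpl.
  - destruct Hh as [-> | [i ->]].
    + exists THole. simpl. apply (sp_red k H0 0). exact Hs.
    + revert H0 Hs. induction i; intros H0 Hs.
      * apply (meaningful_back (TLamApp THole (E k)) H0 (subst 0 (E k) H0)).
        { simpl. eapply nsteps_trans. apply nsteps_step. apply (n_dB [] H0 (E k)).
          cbn [plugL]. rewrite lift_0. apply nsteps_step. constructor. }
        exists THole. simpl. apply (sp_red k _ 0).
        pose proof (sp_subst _ _ _ Hs 0 (E k)) as HS. cbn [subst Nat.ltb Nat.leb Nat.eqb] in HS. rewrite lift_0 in HS. exact HS.
      * apply (meaningful_back (TLamApp THole (E k)) H0 (subst 0 (E k) H0)).
        { simpl. eapply nsteps_trans. apply nsteps_step. apply (n_dB [] H0 (E k)).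
          cbn [plugL]. rewrite lift_0. apply nsteps_step. constructor. }
        apply IHi. pose proof (sp_subst _ _ _ Hs 0 (E k)) as HS. simpl in HS.
        replace (i - 0) with i in HS by lia. exact HS.
  - apply (meaningful_back (TApp THole (E k)) _ (subst 0 (E k) (lamn n H0))).
    { simpl. eapply nsteps_trans. apply nsteps_step. apply (n_dB [] (lamn n H0) (E k)).
      cbn [plugL]. rewrite lift_0. apply nsteps_step. constructor. }
    rewrite subst_lamn. eapply IHn. apply sp_subst. eauto.
    destruct Hh as [-> | [i ->]].
    + left. apply subst_E.
    + simpl. destruct (Nat.ltb_spec i (n + 0)). right; eauto.
      destruct (Nat.eqb_spec i (n+0)). left; apply lift_E. right; eauto.
Qed.

Lemma hnf_meaningful : forall H, hnf H -> meaningful H.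
Proof. intros H Hh. destruct (hnf_sp H Hh) as (n & i & k & H0 & -> & HS).
  eapply good_meaningful; eauto. Qed.


Inductive ap : rterm -> term -> Prop :=
| ap_red m M M' : nsteps M M' -> ap m M' -> ap m M
| ap_var i : ap (rvar i) (Var i)
| ap_lam m M : ap m M -> ap (rlam m) (Lam M)
| ap_app m ns M N : ap m M -> (forall n, In n ns -> ap n N) -> ap (rapp m (rbag ns)) (App M N)
| ap_es m ns M N : ap m M -> (forall n, In n ns -> ap n N) -> ap (res m (rbag ns)) (ES M N).

Lemma taylor_ap : forall m M, taylor m M -> ap m M.
Proof. induction 1; constructor; auto. Qed.

Lemma ap_lam_inv : forall x M, ap x M -> forall m, x = rlam m ->
  exists M0, nsteps M (Lam M0) /\ ap m M0.
Proof. induction 1; intros; try discriminate.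
  - destruct (IHap _ H1) as (M0 & A & B). exists M0; split; auto. eapply nsteps_trans; eauto.
  - inversion H0; subst. exists M; split; auto. apply rt_refl. Qed.

Lemma ap_app_inv : forall x M, ap x M -> forall m n, x = rapp m n ->
  exists ns M1 N, n = rbag ns /\ nsteps M (App M1 N) /\ ap m M1 /\ forall y, In y ns -> ap y N.
Proof. induction 1; intros; try discriminate.
  - destruct (IHap _ _ H1) as (ns & M1 & N & A & B & C & D). exists ns, M1, N; repeat split; auto.
    eapply nsteps_trans; eauto.
  - inversion H2; subst. exists ns, M, N; repeat split; auto. apply rt_refl. Qed.

Lemma ap_es_inv : forall x M, ap x M -> forall m n, x = res m n ->
  exists ns M1 N, n = rbag ns /\ nsteps M (ES M1 N) /\ ap m M1 /\ forall y, In y ns -> ap y N.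
Proof. induction 1; intros; try discriminate.
  - destruct (IHap _ _ H1) as (ns & M1 & N & A & B & C & D). exists ns, M1, N; repeat split; auto.
    eapply nsteps_trans; eauto.
  - inversion H2; subst. exists ns, M, N; repeat split; auto. apply rt_refl. Qed.

Lemma rlift_bag : forall c k ns, rlift c k (rbag ns) = rbag (map (rlift c k) ns).
Proof. reflexivity. Qed.

Lemma ap_lift : forall m M, ap m M -> forall c k, ap (rlift c k m) (lift c k M).
Proof. induction 1; intros; simpl.
  - eapply ap_red. apply nsteps_lift; eauto. auto.
  - destruct (i <? c); constructor.
  - constructor; auto.
  - constructor; auto. intros n Hn. apply in_map_iff in Hn. destruct Hn as (x & <- & Hx). auto.
  - constructor; auto. intros n Hn. apply in_map_iff in Hn. destruct Hn as (x & <- & Hx). auto.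
Qed.

Lemma lsubs_In : forall d K ms ns ms', lsubs d K ms ns ms' -> forall m', In m' ms' ->
  exists m ns1, In m ms /\ lsub d K m ns1 m' /\ incl ns1 ns.
Proof. induction 1; intros y Hy. destruct Hy. destruct Hy as [<- | Hy].
  - exists m, ns1; repeat split; auto. left; auto. apply incl_appl, incl_refl.
  - destruct (IHlsubs y Hy) as (z & ns3 & A & B & C). exists z, ns3; repeat split; auto.
    right; auto. apply incl_appr; auto. Qed.

Lemma ap_subst : forall m M, ap m M -> forall d ns m' N, lsub d 0 m ns m' ->
  (forall n, In n ns -> ap n N) -> ap m' (subst d N M).
Proof. induction 1; intros d ns0 m' N0 Hl Hns.
  - eapply ap_red. apply nsteps_subst; eauto. eauto.
  - inversion Hl; subst; simpl.
    + nat_cases; try lia. constructor.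
    + nat_cases; try lia. apply ap_lift. apply Hns. left; auto.
    + nat_cases; try lia. rewrite Nat.add_0_r. constructor.
  - inversion Hl; subst; simpl. constructor. eauto.
  - inversion Hl; subst; simpl; match goal with H: lsub _ _ (rbag _) _ _ |- _ => inversion H; subst end;
   match goal with H: lsubs _ _ _ _ _ |- _ => rename H into Hs end; constructor;
   [ eapply IHap; eauto; intros; apply Hns; apply in_or_app; auto
   | intros y Hy; destruct (lsubs_In _ _ _ _ _ Hs y Hy) as (z & ns3 & A & B & C);
      eapply H1; eauto; intros; apply Hns; apply in_or_app; right; apply C; auto ].
  - inversion Hl; subst; simpl; match goal with H: lsub _ _ (rbag _) _ _ |- _ => inversion H; subst end;
   match goal with H: lsubs _ _ _ _ _ |- _ => rename H into Hs end; constructor;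
   [ eapply IHap; eauto; intros; apply Hns; apply in_or_app; auto
   | intros y Hy; destruct (lsubs_In _ _ _ _ _ Hs y Hy) as (z & ns3 & A & B & C);
      eapply H1; eauto; intros; apply Hns; apply in_or_app; right; apply C; auto ].
Qed.

Definition bagrel (b : rterm) (B : term) : Prop :=
  exists bs, b = rbag bs /\ forall x, In x bs -> ap x B.

Lemma ap_rplug_inv : forall l X M, ap (rplug l X) M ->
  exists L M2, nsteps M (plugL L M2) /\ Forall2 bagrel l L /\ ap X M2.
Proof. induction l; intros X M H; simpl in *.
  - exists [], M; repeat split; auto. apply rt_refl.
  - destruct (ap_es_inv _ _ H _ _ eq_refl) as (ns & M1 & N & -> & R & A & B).
    destruct (IHl _ _ A) as (L & M2 & R2 & F & A2). exists (N :: L), M2; repeat split; auto.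
    + simpl. eapply nsteps_trans; eauto. apply nsteps_esl; auto.
    + constructor; auto. exists ns; auto. Qed.

Lemma ap_rplug : forall l L X Y, Forall2 bagrel l L -> ap X Y -> ap (rplug l X) (plugL L Y).
Proof. induction 1; intros; simpl; auto. destruct H as (bs & -> & H). constructor; auto. Qed.

Lemma rplug_bag : forall l ns ms, rplug l (rbag ns) = rbag ms -> l = [].
Proof. destruct l; simpl; intros; auto; discriminate. Qed.

Lemma nsteps_plugL : forall L a b, nsteps a b -> nsteps (plugL L a) (plugL L b).
Proof. induction L; intros; simpl; auto. apply nsteps_esl; auto. Qed.

Definition bagap (x : rterm) (N : term) : Prop := exists bs, x = rbag bs /\ forall y, In y bs -> ap y N.

Lemma ap_bag_false : forall x M, ap x M -> forall bs, x = rbag bs -> False.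
Proof. induction 1; intros; try discriminate; eauto. Qed.
Lemma ap_der_false : forall x M, ap x M -> forall y, x = rder y -> False.
Proof. induction 1; intros; try discriminate; eauto. Qed.

Lemma option_map_some : forall {A B} (f : A -> B) r y, option_map f r = Some y ->
  exists x, r = Some x /\ y = f x.
Proof. intros. destruct r; simpl in *; inversion H; eauto. Qed.

Lemma ap_sr : forall t r, rstep t r -> forall t', r = Some t' ->
  (forall M, ap t M -> ap t' M) /\ (forall N, bagap t N -> bagap t' N).
Proof. induction 1; intros t' Et.
  - split; [intros M Hap | intros N (bs & Eb & _); destruct H; discriminate].
    destruct H; inversion Et; subst.
    + exfalso. eapply ap_der_false; eauto.
    + destruct (ap_app_inv _ _ Hap _ _ eq_refl) as (ns & M1 & N & -> & R & A & B).
      destruct (ap_rplug_inv _ _ _ A) as (L & M2 & R2 & F & A2).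
      destruct (ap_lam_inv _ _ A2 _ eq_refl) as (M0 & R3 & A3).
      eapply ap_red. eapply nsteps_trans. apply R. eapply nsteps_trans.
      apply nsteps_appl. eapply nsteps_trans. apply R2. apply nsteps_plugL. apply R3.
      apply nsteps_step. apply n_dB.
      apply ap_rplug; auto. rewrite (Forall2_length F). simpl. constructor; auto.
      intros y Hy. apply in_map_iff in Hy. destruct Hy as (x & <- & Hx). apply ap_lift; auto.
    + destruct (ap_es_inv _ _ Hap _ _ eq_refl) as (ns0 & M1 & N & E1 & R & A & B).
      pose proof (rplug_bag _ _ _ E1); subst l. simpl in *. inversion E1; subst.
      eapply ap_red. eapply nsteps_trans. apply R. apply nsteps_step. apply n_s.
      eapply ap_subst; eauto. intros y Hy. apply B. eapply Permutation_in.
      apply Permutation_sym; eauto. auto.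
  - destruct (option_map_some _ _ _ Et) as (x & -> & ->). split; [intros M Hap | intros N (bs & Eb & _); discriminate].
    destruct (ap_lam_inv _ _ Hap _ eq_refl) as (M0 & R & A).
    eapply ap_red; eauto. constructor. apply (proj1 (IHrstep x eq_refl)); auto.
  - destruct (option_map_some _ _ _ Et) as (x & -> & ->). split; [intros M Hap | intros N (bs & Eb & _); discriminate].
    destruct (ap_app_inv _ _ Hap _ _ eq_refl) as (ns & M1 & N & -> & R & A & B).
    eapply ap_red; eauto. constructor; auto. apply (proj1 (IHrstep x eq_refl)); auto.
  - destruct (option_map_some _ _ _ Et) as (x & -> & ->). split; [intros M Hap | intros N (bs & Eb & _); discriminate].
    destruct (ap_app_inv _ _ Hap _ _ eq_refl) as (ns & M1 & N & -> & R & A & B).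
    destruct (proj2 (IHrstep x eq_refl) N) as (bs & -> & C). exists ns; auto.
    eapply ap_red; eauto. constructor; auto.
  - destruct (option_map_some _ _ _ Et) as (x & -> & ->). split; [intros M Hap | intros N (bs & Eb & _); discriminate].
    destruct (ap_es_inv _ _ Hap _ _ eq_refl) as (ns & M1 & N & -> & R & A & B).
    eapply ap_red; eauto. constructor; auto. apply (proj1 (IHrstep x eq_refl)); auto.
  - destruct (option_map_some _ _ _ Et) as (x & -> & ->). split; [intros M Hap | intros N (bs & Eb & _); discriminate].
    destruct (ap_es_inv _ _ Hap _ _ eq_refl) as (ns & M1 & N & -> & R & A & B).
    destruct (proj2 (IHrstep x eq_refl) N) as (bs & -> & C). exists ns; auto.
    eapply ap_red; eauto. constructor; auto.
  - destruct (option_map_some _ _ _ Et) as (x & -> & ->). split; [intros M Hap | intros N (bs & Eb & _); discriminate].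
    exfalso; eapply ap_der_false; eauto.
  - destruct (option_map_some _ _ _ Et) as (x & -> & ->). split; [intros M Hap; exfalso; eapply ap_bag_false; eauto|].
    intros N (bs & Eb & C). inversion Eb; subst. exists (ms1 ++ x :: ms2); split; auto.
    intros y Hy. apply in_app_or in Hy. destruct Hy as [Hy | [<- | Hy]].
    + apply C, in_or_app; auto.
    + apply (proj1 (IHrstep x eq_refl)). apply C, in_or_app; right; left; auto.
    + apply C, in_or_app; right; right; auto.
Qed.

Lemma ap_srs : forall t t', rsteps t t' -> forall M, ap t M -> ap t' M.
Proof. induction 1; intros; eauto. eapply ap_sr; eauto. Qed.

Fixpoint rterm_ind2 (P : rterm -> Prop)
  (fv : forall i, P (rvar i)) (fl : forall m, P m -> P (rlam m))
  (fa : forall m n, P m -> P n -> P (rapp m n)) (fe : forall m n, P m -> P n -> P (res m n))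
  (fd : forall m, P m -> P (rder m)) (fb : forall ts, Forall P ts -> P (rbag ts))
  (t : rterm) : P t :=
  match t with
  | rvar i => fv i
  | rlam m => fl m (rterm_ind2 P fv fl fa fe fd fb m)
  | rapp m n => fa m n (rterm_ind2 P fv fl fa fe fd fb m) (rterm_ind2 P fv fl fa fe fd fb n)
  | res m n => fe m n (rterm_ind2 P fv fl fa fe fd fb m) (rterm_ind2 P fv fl fa fe fd fb n)
  | rder m => fd m (rterm_ind2 P fv fl fa fe fd fb m)
  | rbag ts => fb ts ((fix g (ts : list rterm) : Forall P ts :=
       match ts with [] => Forall_nil _
       | x :: xs => Forall_cons _ (rterm_ind2 P fv fl fa fe fd fb x) (g xs) end) ts)
  end.

Lemma split_ns : forall (ns : list rterm) a b, a + b = length ns ->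
  exists ns1 ns2, ns = ns1 ++ ns2 /\ length ns1 = a /\ length ns2 = b.
Proof. intros. exists (firstn a ns), (skipn a ns). rewrite firstn_skipn.
  rewrite length_firstn, length_skipn. split; auto. split; lia. Qed.

Lemma lsub_exists : forall m d K ns, occ d m = length ns -> exists m', lsub d K m ns m'.
Proof.
  induction m using rterm_ind2; intros d K ns Hl; simpl in Hl.
  - destruct (Nat.eqb_spec i d).
    + subst. destruct ns as [|n [|]]; simpl in Hl; try lia. eexists; constructor.
    + destruct ns; simpl in Hl; try lia. destruct (Nat.lt_ge_cases i d).
      * eexists; constructor; auto.
      * eexists; apply ls_free; lia.
  - destruct (IHm (S d) K ns Hl) as (m' & H). eexists; constructor; eauto.
  - destruct (split_ns ns _ _ Hl) as (ns1 & ns2 & -> & L1 & L2).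
    destruct (IHm1 d K ns1 (eq_sym L1)) as (a & Ha). destruct (IHm2 d K ns2 (eq_sym L2)) as (b & Hb).
    eexists; constructor; eauto.
  - destruct (split_ns ns _ _ Hl) as (ns1 & ns2 & -> & L1 & L2).
    destruct (IHm1 (S d) K ns1 (eq_sym L1)) as (a & Ha). destruct (IHm2 d K ns2 (eq_sym L2)) as (b & Hb).
    eexists; constructor; eauto.
  - destruct (IHm d K ns Hl) as (m' & H). eexists; constructor; eauto.
  - assert (exists ts', lsubs d K ts ns ts') as (ts' & Ht).
    { revert ns Hl. induction H; intros ns Hl; simpl in Hl.
      - destruct ns; simpl in Hl; try lia. eexists; constructor.
      - destruct (split_ns ns _ _ Hl) as (ns1 & ns2 & -> & L1 & L2).
        destruct (H d K ns1 (eq_sym L1)) as (a & Ha). destruct (IHForall ns2 (eq_sym L2)) as (b & Hb).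
        eexists; constructor; eauto. }
    eexists; constructor; eauto.
Qed.

Lemma res_not_normal : forall m ns, ~ rnormal (res m (rbag ns)).
Proof. intros m ns Hn. destruct (Nat.eq_dec (occ 0 m) (length ns)).
  - destruct (lsub_exists m 0 0 ns e) as (m' & H).
    apply (Hn (Some m')). constructor. apply (r_subst [] m ns ns m'); auto.
  - apply (Hn None). constructor. apply (r_subst0 [] m ns); auto. Qed.

Lemma base : forall p M, ap p M -> rnormal p ->
  exists H, nsteps M H /\ hnf H /\ ((~ exists m0, p = rlam m0) -> ne H).
Proof. induction 1; intros Hn.
  - destruct (IHap Hn) as (G1 & R & A & B). exists G1; split; auto. eapply nsteps_trans; eauto.
  - exists (Var i); split; [|split]. apply rt_refl. repeat constructor. constructor.
  - assert (rnormal m) as Hm. { intros r Hr. apply (Hn (option_map rlam r)). apply rs_lam; auto. }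
    destruct (IHap Hm) as (G1 & R & A & B).
    exists (Lam G1); split; [|split]. apply nsteps_lam; auto. apply hnf_lam; auto.
    intros Hm0. exfalso. apply Hm0. eauto.
  - assert (rnormal m) as Hm. { intros r Hr. apply (Hn (option_map (fun m' => rapp m' (rbag ns)) r)). apply rs_appl; auto. }
    destruct (IHap Hm) as (G1 & R & A & B).
    assert (ne G1) as Hne.
    { apply B. intros (m0 & ->). apply (Hn (Some (rplug [] (res m0 (rlift 0 0 (rbag ns)))))).
      constructor. apply (r_beta [] m0 (rbag ns)). }
    exists (App G1 N); split; [|split]. apply nsteps_appl; auto. repeat constructor; auto.
    intros; constructor; auto.
  - exfalso. eapply res_not_normal; eauto.
Qed.

Theorem direction_left : forall M, (exists p, nf_taylor M p) -> meaningful M.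
Proof. intros M (p & Hn & m & Ht & Hr).
  pose proof (ap_srs _ _ Hr M (taylor_ap _ _ Ht)) as Hap.
  destruct (base _ _ Hap Hn) as (H & R & Hh & _).
  eapply meaningful_red; eauto. apply hnf_meaningful; auto. Qed.


Lemma list_choice : forall {A B} (P : A -> B -> Prop) (l : list A),
  (forall x, In x l -> exists y, P x y) -> exists l', Forall2 P l l'.
Proof. induction l; intros H. exists []; constructor.
  destruct (H a (or_introl eq_refl)) as (y & Hy).
  destruct IHl as (l' & Hl'). intros; apply H; right; auto.
  exists (y :: l'); constructor; auto. Qed.

Lemma Forall2_In_r : forall {A B} (P : A -> B -> Prop) l l', Forall2 P l l' ->
  forall y, In y l' -> exists x, In x l /\ P x y.
Proof. induction 1; intros z Hz. destruct Hz. destruct Hz as [<- | Hz].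
  exists x; split; auto. left; auto. destruct (IHForall2 z Hz) as (w & W1 & W2). exists w; split; auto. right; auto. Qed.
Lemma Forall2_In_l : forall {A B} (P : A -> B -> Prop) l l', Forall2 P l l' ->
  forall x, In x l -> exists y, In y l' /\ P x y.
Proof. induction 1; intros z Hz. destruct Hz. destruct Hz as [<- | Hz].
  exists y; split; auto. left; auto. destruct (IHForall2 z Hz) as (w & W1 & W2). exists w; split; auto. right; auto. Qed.

Lemma taylor_lift_inv : forall N m c k, taylor m (lift c k N) -> exists n, m = rlift c k n /\ taylor n N.
Proof. induction N; intros m c k H; simpl in H.
  - exists (rvar n). destruct (Nat.ltb_spec n c); inversion H; subst; simpl;
    destruct (Nat.ltb_spec n c); split; auto; try lia; constructor.
  - inversion H; subst. destruct (IHN _ _ _ H2) as (n & -> & Hn). exists (rlam n); split; auto. constructor; auto.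
  - inversion H; subst. destruct (IHN1 _ _ _ H3) as (a & -> & Ha).
    destruct (list_choice (fun x y => x = rlift c k y /\ taylor y N2) ns) as (ys & Hy).
    { intros x Hx. apply IHN2. auto. }
    exists (rapp a (rbag ys)). split.
    + simpl. f_equal. f_equal. clear -Hy. induction Hy; simpl; auto. destruct H; subst. f_equal; auto.
    + constructor; auto. intros y Hy'. destruct (Forall2_In_r _ _ _ Hy y Hy') as (x & _ & _ & T). auto.
  - inversion H; subst. destruct (IHN1 _ _ _ H3) as (a & -> & Ha).
    destruct (list_choice (fun x y => x = rlift c k y /\ taylor y N2) ns) as (ys & Hy).
    { intros x Hx. apply IHN2. auto. }
    exists (res a (rbag ys)). split.
    + simpl. f_equal. f_equal. clear -Hy. induction Hy; simpl; auto. destruct H; subst. f_equal; auto.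
    + constructor; auto. intros y Hy'. destruct (Forall2_In_r _ _ _ Hy y Hy') as (x & _ & _ & T). auto.
Qed.

Lemma lsubs_build : forall d B N bs',
  (forall b', In b' bs' -> exists b ns, taylor b B /\ (forall n, In n ns -> taylor n N) /\ lsub d 0 b ns b') ->
  exists bs ns, (forall b, In b bs -> taylor b B) /\ (forall n, In n ns -> taylor n N) /\ lsubs d 0 bs ns bs'.
Proof. induction bs'; intros H.
  - exists [], []; repeat split; try (intros _ []). constructor.
  - destruct (H a (or_introl eq_refl)) as (b & ns & T & Tn & L).
    destruct IHbs' as (bs & ns2 & T2 & Tn2 & L2). intros; apply H; right; auto.
    exists (b :: bs), (ns ++ ns2); repeat split.
    + intros x [<- | Hx]; auto.
    + intros x Hx. apply in_app_or in Hx. destruct Hx; auto.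
    + constructor; auto.
Qed.

Lemma taylor_subst_dec : forall M0 d N m', taylor m' (subst d N M0) ->
  exists m0 ns, taylor m0 M0 /\ (forall n, In n ns -> taylor n N) /\ lsub d 0 m0 ns m'.
Proof. induction M0; intros d N m' H; simpl in H.
  - destruct (Nat.ltb_spec n d); [|destruct (Nat.eqb_spec n d)].
    + inversion H; subst. exists (rvar n), []; repeat split; try constructor; auto. intros _ [].
    + subst. destruct (taylor_lift_inv _ _ _ _ H) as (x & -> & Hx).
      exists (rvar d), [x]; repeat split. constructor. intros y [<- | []]; auto. constructor.
    + inversion H; subst. exists (rvar n), []; repeat split. constructor. intros _ [].
      replace (n - 1) with (n - 1 + 0) by lia. constructor. lia.
  - inversion H; subst. destruct (IHM0 _ _ _ H2) as (m0 & ns & T & Tn & L).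
    exists (rlam m0), ns; repeat split; auto; constructor; auto.
  - inversion H; subst. destruct (IHM0_1 _ _ _ H3) as (a & ns1 & T & Tn & L).
    destruct (lsubs_build d M0_2 N ns) as (bs & ns2 & T2 & Tn2 & L2).
    { intros b' Hb. apply IHM0_2. auto. }
    exists (rapp a (rbag bs)), (ns1 ++ ns2); repeat split.
    + constructor; auto.
    + intros x Hx. apply in_app_or in Hx. destruct Hx; auto.
    + constructor; auto. constructor; auto.
  - inversion H; subst. destruct (IHM0_1 _ _ _ H3) as (a & ns1 & T & Tn & L).
    destruct (lsubs_build d M0_2 N ns) as (bs & ns2 & T2 & Tn2 & L2).
    { intros b' Hb. apply IHM0_2. auto. }
    exists (res a (rbag bs)), (ns1 ++ ns2); repeat split.
    + constructor; auto.
    + intros x Hx. apply in_app_or in Hx. destruct Hx; auto.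
    + constructor; auto. constructor; auto.
Qed.

Definition tbag (b : rterm) (B : term) : Prop := exists bs, b = rbag bs /\ forall z, In z bs -> taylor z B.

Lemma taylor_plugL_inv : forall L X x, taylor x (plugL L X) ->
  exists l y, x = rplug l y /\ Forall2 tbag l L /\ taylor y X.
Proof. induction L; intros X x H; simpl in H.
  - exists [], x; repeat split; auto.
  - inversion H; subst. destruct (IHL _ _ H3) as (l & y & -> & F & T).
    exists (rbag ns :: l), y; repeat split; auto. constructor; auto. exists ns; auto. Qed.

Lemma taylor_plugL : forall l L y X, Forall2 tbag l L -> taylor y X -> taylor (rplug l y) (plugL L X).
Proof. induction 1; intros; simpl; auto. destruct H as (bs & -> & H). constructor; auto. Qed.

Lemma rsteps_ctx : forall (f : rterm -> rterm), (forall a r, rstep a r -> rstep (f a) (option_map f r)) ->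
  forall a b, rsteps a b -> rsteps (f a) (f b).
Proof. intros f Hf a b H. induction H.
  - apply rt_step. apply (Hf _ (Some y)); auto.
  - apply rt_refl.
  - eapply rt_trans; eauto. Qed.

Lemma rsteps_lam : forall a b, rsteps a b -> rsteps (rlam a) (rlam b).
Proof. apply rsteps_ctx. intros; apply rs_lam; auto. Qed.
Lemma rsteps_appl : forall n a b, rsteps a b -> rsteps (rapp a n) (rapp b n).
Proof. intro n. apply (rsteps_ctx (fun x => rapp x n)). intros; apply rs_appl; auto. Qed.
Lemma rsteps_appr : forall m a b, rsteps a b -> rsteps (rapp m a) (rapp m b).
Proof. intro m. apply (rsteps_ctx (fun x => rapp m x)). intros; apply rs_appr; auto. Qed.
Lemma rsteps_esl : forall n a b, rsteps a b -> rsteps (res a n) (res b n).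
Proof. intro n. apply (rsteps_ctx (fun x => res x n)). intros; apply rs_esl; auto. Qed.
Lemma rsteps_esr : forall m a b, rsteps a b -> rsteps (res m a) (res m b).
Proof. intro m. apply (rsteps_ctx (fun x => res m x)). intros; apply rs_esr; auto. Qed.
Lemma rsteps_trans : forall a b c, rsteps a b -> rsteps b c -> rsteps a c.
Proof. intros; eapply rt_trans; eauto. Qed.

Lemma rsteps_bag : forall bs bs', Forall2 rsteps bs bs' -> forall pre, rsteps (rbag (pre ++ bs)) (rbag (pre ++ bs')).
Proof. induction 1; intros pre. apply rt_refl.
  eapply rsteps_trans.
  - apply (rsteps_ctx (fun z => rbag (pre ++ z :: l))). intros; apply rs_bag; auto. eauto.
  - specialize (IHForall2 (pre ++ [y])). rewrite <- !app_assoc in IHForall2. exact IHForall2.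
Qed.

Lemma bag_back : forall N bs', (forall b', In b' bs' -> exists b, taylor b N /\ rsteps b b') ->
  exists bs, (forall b, In b bs -> taylor b N) /\ rsteps (rbag bs) (rbag bs').
Proof. intros N bs' H.
  destruct (list_choice (fun b' b => taylor b N /\ rsteps b b') bs' H) as (bs & F).
  exists bs; split.
  - intros b Hb. destruct (Forall2_In_r _ _ _ F b Hb) as (x & _ & T & _). auto.
  - apply (rsteps_bag bs bs') with (pre := []). clear -F. induction F; constructor; auto. apply H.
Qed.

Lemma anti_sim : forall M M', nstep M M' -> forall m', taylor m' M' -> exists m, taylor m M /\ rsteps m m'.
Proof. induction 1; intros m' H'.
  - destruct (taylor_plugL_inv _ _ _ H') as (l & y & -> & F & T).
    inversion T; subst. destruct (list_choice (fun x y => x = rlift 0 (length L) y /\ taylor y N) ns) as (ys & Hy).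
    { intros x Hx. apply taylor_lift_inv. auto. }
    exists (rapp (rplug l (rlam m)) (rbag ys)). split.
    + constructor. apply taylor_plugL; auto. constructor; auto.
      intros y Hy'. destruct (Forall2_In_r _ _ _ Hy y Hy') as (x & _ & _ & T'). auto.
    + apply rt_step. constructor.
      replace (rplug l (res m (rbag ns))) with (rplug l (res m (rlift 0 (length l) (rbag ys)))).
      apply r_beta. simpl. rewrite (Forall2_length F). f_equal. f_equal. f_equal.
      clear -Hy. induction Hy; simpl; auto. destruct H; subst. f_equal; auto.
  - destruct (taylor_subst_dec _ _ _ _ H') as (m0 & ns & T & Tn & L).
    exists (res m0 (rbag ns)). split. constructor; auto.
    apply rt_step. constructor. apply (r_subst [] m0 ns ns m'); auto.
  - inversion H'; subst. destruct (IHnstep _ ltac:(eassumption)) as (m1 & T & R). exists (rlam m1); split.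
    constructor; auto. apply rsteps_lam; auto.
  - inversion H'; subst. destruct (IHnstep _ ltac:(eassumption)) as (m1 & T & R). exists (rapp m1 (rbag ns)); split.
    constructor; auto. apply rsteps_appl; auto.
  - inversion H'; subst. destruct (bag_back N ns) as (bs & T & R). intros; apply IHnstep; auto.
    exists (rapp m (rbag bs)); split. constructor; auto. apply rsteps_appr; auto.
  - inversion H'; subst. destruct (IHnstep _ ltac:(eassumption)) as (m1 & T & R). exists (res m1 (rbag ns)); split.
    constructor; auto. apply rsteps_esl; auto.
  - inversion H'; subst. destruct (bag_back N ns) as (bs & T & R). intros; apply IHnstep; auto.
    exists (res m (rbag bs)); split. constructor; auto. apply rsteps_esr; auto.
Qed.

Lemma anti_sims : forall M M', nsteps M M' -> forall m', taylor m' M' -> exists m, taylor m M /\ rsteps m m'.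
Proof. induction 1; intros m' H'.
  - eapply anti_sim; eauto.
  - exists m'; split; auto. apply rt_refl.
  - destruct (IHclos_refl_trans2 _ H') as (m1 & T1 & R1).
    destruct (IHclos_refl_trans1 _ T1) as (m0 & T0 & R0).
    exists m0; split; auto. eapply rsteps_trans; eauto. Qed.


Inductive ty : Type := Star : ty | Arr : list ty -> ty -> ty.
Definition ty_eq_dec : forall a b : ty, {a = b} + {a <> b}.
Proof. fix IH 1. intros [|As B] [|Bs C]; try (right; discriminate).
  - left; auto.
  - destruct (IH B C) as [<-|n]; [|right; congruence].
    destruct (list_eq_dec IH As Bs) as [<-|n]; [left; auto| right; congruence].
Defined.

Definition env := nat -> list ty.
Definition eqv (G D : env) : Prop := forall i, Permutation (G i) (D i).
Definition plus (G D : env) : env := fun i => G i ++ D i.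
Definition emp : env := fun _ => [].
Definition single (i : nat) (A : ty) : env := fun j => if j =? i then [A] else [].
Definition etail (G : env) : env := fun i => G (S i).
Definition ins (c k : nat) (G : env) : env :=
  fun i => if i <? c then G i else if i <? c + k then [] else G (i - k).
Definition del (d : nat) (G : env) : env := fun i => if i <? d then G i else G (S i).

Ltac pcount :=
  repeat match goal with
  | H : Permutation _ _ |- _ =>
      let h := fresh "C" in pose proof (proj1 (Permutation_count_occ ty_eq_dec _ _) H) as h; clear H
  end;
  apply (Permutation_count_occ ty_eq_dec); let x := fresh "x" in intro x;
  repeat match goal with H : forall y : ty, _ |- _ => specialize (H x) end;
  repeat rewrite count_occ_app in *; simpl in *; lia.

Lemma eqv_refl : forall G, eqv G G. Proof. intros G i; apply Permutation_refl. Qed.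
Lemma eqv_sym : forall G D, eqv G D -> eqv D G. Proof. intros G D H i; apply Permutation_sym; auto. Qed.
Lemma eqv_trans : forall G D E, eqv G D -> eqv D E -> eqv G E.
Proof. intros G D E H1 H2 i; eapply Permutation_trans; eauto. Qed.

#[export] Instance eqv_Equiv : Equivalence eqv.
Proof. split. exact eqv_refl. exact eqv_sym. exact eqv_trans. Qed.

#[export] Instance plus_Proper : Proper (eqv ==> eqv ==> eqv) plus.
Proof. intros a b H c d H' i. unfold plus. apply Permutation_app; auto. Qed.
#[export] Instance tail_Proper : Proper (eqv ==> eqv) etail.
Proof. intros a b H i. apply H. Qed.
#[export] Instance ins_Proper c k : Proper (eqv ==> eqv) (ins c k).
Proof. intros a b H i. unfold ins. destruct (i <? c); [|destruct (i <? c + k)]; auto. Qed.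
#[export] Instance del_Proper d : Proper (eqv ==> eqv) (del d).
Proof. intros a b H i. unfold del. destruct (i <? d); auto. Qed.

Lemma plus_comm : forall a b, eqv (plus a b) (plus b a).
Proof. intros a b i. unfold plus. apply Permutation_app_comm. Qed.
Lemma plus_assoc : forall a b c, eqv (plus a (plus b c)) (plus (plus a b) c).
Proof. intros a b c i. unfold plus. rewrite app_assoc. auto. Qed.
Lemma plus_emp : forall a, eqv (plus a emp) a.
Proof. intros a i. unfold plus, emp. rewrite app_nil_r; auto. Qed.
Lemma emp_plus : forall a, eqv (plus emp a) a.
Proof. intros a i. unfold plus, emp. auto. Qed.
Lemma ins_plus : forall c k a b, eqv (ins c k (plus a b)) (plus (ins c k a) (ins c k b)).
Proof. intros c k a b i. unfold ins, plus. destruct (i <? c); [|destruct (i <? c + k)]; auto. Qed.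
Lemma del_plus : forall d a b, eqv (del d (plus a b)) (plus (del d a) (del d b)).
Proof. intros d a b i. unfold del, plus. destruct (i <? d); auto. Qed.
Lemma tail_ins : forall c k a, eqv (etail (ins (S c) k a)) (ins c k (etail a)).
Proof. intros c k a i. unfold etail, ins. nat_cases; try lia; auto.
  replace (S i - k) with (S (i - k)) by lia. auto.
Qed.
Lemma ins_single : forall c k i A,
  eqv (ins c k (single i A)) (single (if i <? c then i else i + k) A).
Proof. intros c k i A j. unfold ins, single. nat_cases; simpl; auto; nat_cases; try lia; auto. Qed.
Lemma ins_emp : forall c k, eqv (ins c k emp) emp.
Proof. intros c k i. unfold ins, emp. destruct (i <? c); [|destruct (i <? c + k)]; auto. Qed.
Lemma ins00 : forall a, eqv (ins 0 0 a) a.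
Proof. intros a i. unfold ins. simpl. rewrite Nat.sub_0_r. auto. Qed.
Lemma del0 : forall a, eqv (del 0 a) (etail a).
Proof. intros a i. unfold del, etail. simpl. auto. Qed.
Lemma tail_ins01 : forall a, eqv (etail (ins 0 1 a)) a.
Proof. intros a i. unfold etail, ins. simpl. rewrite Nat.sub_0_r. auto. Qed.
Lemma del_single_eq : forall d A, eqv (del d (single d A)) emp.
Proof. intros d A j. unfold del, single, emp. nat_cases; auto; lia. Qed.
Lemma del_single_lt : forall d i A, i < d -> eqv (del d (single i A)) (single i A).
Proof. intros d i A H j. unfold del, single. nat_cases; auto; lia. Qed.
Lemma del_single_gt : forall d i A, d < i -> eqv (del d (single i A)) (single (i - 1) A).
Proof. intros d i A H j. unfold del, single. nat_cases; auto; lia. Qed.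
Lemma tail_sub : forall d a b, eqv (etail (plus (del (S d) a) (ins 0 (S d) b))) (plus (del d (etail a)) (ins 0 d b)).
Proof. intros d a b i. unfold etail, plus, del, ins. simpl. nat_cases; auto; try lia. Qed.

Inductive typed : env -> rterm -> ty -> Prop :=
| ty_var G i A : eqv G (single i A) -> typed G (rvar i) A
| ty_lam G D m As B : typed D m B -> Permutation (D 0) As -> eqv (etail D) G -> typed G (rlam m) (Arr As B)
| ty_app G G1 G2 m ns As As' B : typed G1 m (Arr As B) -> btyped G2 ns As' -> Permutation As' As ->
    eqv G (plus G1 G2) -> typed G (rapp m (rbag ns)) B
| ty_es G G1 G2 m ns As B : typed G1 m B -> btyped G2 ns As -> Permutation As (G1 0) ->
    eqv G (plus (etail G1) G2) -> typed G (res m (rbag ns)) B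
with btyped : env -> list rterm -> list ty -> Prop :=
| bt_nil G : eqv G emp -> btyped G [] []
| bt_cons G G1 G2 n ns A As : typed G1 n A -> btyped G2 ns As -> eqv G (plus G1 G2) -> btyped G (n :: ns) (A :: As).

Scheme typed_mut := Induction for typed Sort Prop with btyped_mut := Induction for btyped Sort Prop.
Combined Scheme tb_mut from typed_mut, btyped_mut.

Lemma typed_eqv : forall G G' t A, eqv G G' -> typed G t A -> typed G' t A.
Proof. intros G G' t A E H. destruct H.
  - constructor. rewrite <- E; auto.
  - econstructor; eauto. rewrite H1; auto.
  - econstructor; eauto. rewrite <- E; auto.
  - econstructor; eauto. rewrite <- E; auto. Qed.
Lemma btyped_eqv : forall G G' t A, eqv G G' -> btyped G t A -> btyped G' t A.
Proof. intros G G' t A E H. destruct H.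
  - constructor. rewrite <- E; auto.
  - econstructor; eauto. rewrite <- E; auto. Qed.

#[export] Instance typed_Proper : Proper (eqv ==> eq ==> eq ==> iff) typed.
Proof. intros a b H t t' <- A A' <-. split; apply typed_eqv; auto. symmetry; auto. Qed.
#[export] Instance btyped_Proper : Proper (eqv ==> eq ==> eq ==> iff) btyped.
Proof. intros a b H t t' <- A A' <-. split; apply btyped_eqv; auto. symmetry; auto. Qed.

Lemma btyped_app : forall G1 ns1 As1, btyped G1 ns1 As1 -> forall G2 ns2 As2, btyped G2 ns2 As2 ->
  btyped (plus G1 G2) (ns1 ++ ns2) (As1 ++ As2).
Proof. induction 1; intros; simpl.
  - rewrite H, emp_plus; auto.
  - econstructor; eauto. rewrite H1, <- plus_assoc. reflexivity. Qed.

Lemma btyped_split : forall As1 As2 G ns, btyped G ns (As1 ++ As2) ->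
  exists ns1 ns2 G1 G2, ns = ns1 ++ ns2 /\ btyped G1 ns1 As1 /\ btyped G2 ns2 As2 /\ eqv G (plus G1 G2).
Proof. induction As1; intros As2 G ns H; simpl in H.
  - exists [], ns, emp, G; repeat split; auto. constructor; reflexivity. rewrite emp_plus; reflexivity.
  - inversion H as [|G' Ga Gb n ns0 A0 As0 Ht Hbt He]; subst.
    destruct (IHAs1 _ _ _ Hbt) as (ns1 & ns2 & Gc & Gd & -> & B1 & B2 & E).
    exists (n :: ns1), ns2, (plus Ga Gc), Gd; repeat split; auto.
    econstructor; eauto. reflexivity. rewrite He, E. apply plus_assoc. Qed.

Lemma btyped_perm_ty : forall As As', Permutation As As' -> forall G ns, btyped G ns As ->
  exists ns', Permutation ns ns' /\ btyped G ns' As'.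
Proof. induction 1; intros G ns Hb.
  - exists ns; auto.
  - inversion Hb as [|G' Ga Gb n ns0 A0 As0 Ht Hbt He]; subst.
    destruct (IHPermutation _ _ Hbt) as (ns' & P & B).
    exists (n :: ns'); split; auto. econstructor; eauto.
  - inversion Hb as [|G' Ga Gb n ns0 A0 As0 Ht Hbt He]; subst.
    inversion Hbt as [|G'' Gc Gd n1 ns1 A1 As1 Ht1 Hbt1 He1]; subst.
    exists (n1 :: n :: ns1); split. apply perm_swap.
    econstructor; eauto. econstructor; eauto. reflexivity.
    rewrite He, He1. rewrite !plus_assoc. rewrite (plus_comm Ga Gc). reflexivity.
  - destruct (IHPermutation1 _ _ Hb) as (ns1 & P1 & B1). destruct (IHPermutation2 _ _ B1) as (ns2 & P2 & B2).
    exists ns2; split; auto. eapply Permutation_trans; eauto. Qed.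

Lemma btyped_perm_tm : forall ns ns', Permutation ns ns' -> forall G As, btyped G ns As ->
  exists As', Permutation As As' /\ btyped G ns' As'.
Proof. induction 1; intros G As Hb.
  - exists As; auto.
  - inversion Hb as [|G' Ga Gb n ns0 A0 As0 Ht Hbt He]; subst.
    destruct (IHPermutation _ _ Hbt) as (As' & P & B).
    exists (A0 :: As'); split; auto. econstructor; eauto.
  - inversion Hb as [|G' Ga Gb n ns0 A0 As0 Ht Hbt He]; subst.
    inversion Hbt as [|G'' Gc Gd n1 ns1 A1 As1 Ht1 Hbt1 He1]; subst.
    exists (A1 :: A0 :: As1); split. apply perm_swap.
    econstructor; eauto. econstructor; eauto. reflexivity.
    rewrite He, He1. rewrite !plus_assoc. rewrite (plus_comm Ga Gc). reflexivity.
  - destruct (IHPermutation1 _ _ Hb) as (As1 & P1 & B1). destruct (IHPermutation2 _ _ B1) as (As2 & P2 & B2).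
    exists As2; split; auto. eapply Permutation_trans; eauto. Qed.

Lemma btyped_in : forall ms1 x ms2 G As, btyped G (ms1 ++ x :: ms2) As ->
  exists Gx A0, typed Gx x A0 /\ forall y, typed Gx y A0 -> btyped G (ms1 ++ y :: ms2) As.
Proof. induction ms1; intros x ms2 G As H; simpl in *.
  - inversion H as [|G' Ga Gb n ns0 A0 As0 Ht Hbt He]; subst. exists Ga, A0; split; auto. intros; econstructor; eauto.
  - inversion H as [|G' Ga Gb n ns0 A0 As0 Ht Hbt He]; subst. destruct (IHms1 _ _ _ _ Hbt) as (Gx & A1 & T & F).
    exists Gx, A1; split; auto. intros; econstructor; eauto. Qed.


Lemma rlift_0 : forall t c, rlift c 0 t = t.
Proof. induction t using rterm_ind2; intros; simpl; try (f_equal; auto; fail).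
  - destruct (Nat.ltb_spec i c); f_equal; lia.
  - f_equal. induction H; simpl; auto. f_equal; auto. Qed.

Lemma rlift_comp : forall t c d j a, c <= d -> d <= c + j ->
  rlift d a (rlift c j t) = rlift c (j + a) t.
Proof. induction t using rterm_ind2; intros; simpl; try (f_equal; auto; fail).
  - nat_cases; simpl; nat_cases; f_equal; lia.
  - f_equal. apply IHt; lia.
  - f_equal. apply IHt1; lia. auto.
  - f_equal. induction H; simpl; auto. f_equal; auto. Qed.

Lemma ins_S_0 : forall c k D, ins (S c) k D 0 = D 0.
Proof. reflexivity. Qed.

Lemma lift_typed_mut :
  (forall G t A, typed G t A -> forall c k, typed (ins c k G) (rlift c k t) A) /\
  (forall G ns As, btyped G ns As -> forall c k, btyped (ins c k G) (map (rlift c k) ns) As).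
Proof.
  apply (tb_mut (fun G t A _ => forall c k, typed (ins c k G) (rlift c k t) A)
                         (fun G ns As _ => forall c k, btyped (ins c k G) (map (rlift c k) ns) As));
  intros; simpl.
  all: try (destruct (i <? c) eqn:Ei; constructor; rewrite e, ins_single, Ei; reflexivity).
  all: try (econstructor; [apply H | rewrite ins_S_0; auto | rewrite tail_ins, e; reflexivity]).
  all: try (econstructor; [apply H | apply H0 | eauto | rewrite e, ins_plus; reflexivity]).
  all: try (econstructor; [apply H | apply H0 | rewrite ins_S_0; eauto | rewrite e, ins_plus, tail_ins; reflexivity]).
  all: try (constructor; rewrite e, ins_emp; reflexivity).
  all: try (econstructor; [apply H | apply H0 | rewrite e, ins_plus; reflexivity]).
Qed.

Lemma lift_typed : forall G t A c k, typed G t A -> typed (ins c k G) (rlift c k t) A.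
Proof. intros. apply lift_typed_mut; auto. Qed.
Lemma lift_btyped : forall G ns As c k, btyped G ns As -> btyped (ins c k G) (map (rlift c k) ns) As.
Proof. intros. apply lift_typed_mut; auto. Qed.

Lemma map_eq_nil : forall {A B} (f : A -> B) l, [] = map f l -> l = [].
Proof. destruct l; simpl; auto; discriminate. Qed.

Lemma lift_inv_mut :
  (forall G x A, typed G x A -> forall c k t, x = rlift c k t -> exists D, eqv G (ins c k D) /\ typed D t A) /\
  (forall G xs As, btyped G xs As -> forall c k ns, xs = map (rlift c k) ns -> exists D, eqv G (ins c k D) /\ btyped D ns As).
Proof.
  apply (tb_mut (fun G x A _ => forall c k t, x = rlift c k t -> exists D, eqv G (ins c k D) /\ typed D t A)
                         (fun G xs As _ => forall c k ns, xs = map (rlift c k) ns -> exists D, eqv G (ins c k D) /\ btyped D ns As)).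
  - intros G i A e c k t Et. destruct t; simpl in Et; try discriminate; try (match type of Et with context[if ?b then _ else _] => destruct b; discriminate end).
    exists (single n A). split; [|constructor; reflexivity].
    rewrite e, ins_single. destruct (n <? c); inversion Et; subst; reflexivity.
  - intros G D m As B T IH P e c k t Et. destruct t as [|t| | | |]; simpl in Et; try discriminate; try (match type of Et with context[if ?b then _ else _] => destruct b; discriminate end). inversion Et; subst.
    destruct (IH (S c) k t eq_refl) as (D0 & E0 & T0). exists (etail D0). split.
    + rewrite <- e, E0. apply tail_ins.
    + econstructor; eauto. rewrite <- (ins_S_0 c k D0). rewrite <- (E0 0). auto. reflexivity.
  - intros G G1 G2 m ns As As' B T IH Bt IHb P e c k t Et. destruct t as [| |t1 t2|t1 t2| |]; simpl in Et; try discriminate; try (match type of Et with context[if ?b then _ else _] => destruct b; discriminate end).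
    destruct t2 as [| | | | |l]; simpl in Et; try discriminate; try (match type of Et with context[if ?b then _ else _] => destruct b; discriminate end). inversion Et; subst.
    destruct (IH c k t1 eq_refl) as (D1 & E1 & T1). destruct (IHb c k l eq_refl) as (D2 & E2 & B2).
    exists (plus D1 D2). split. rewrite e, E1, E2, ins_plus. reflexivity. econstructor; eauto. reflexivity.
  - intros G G1 G2 m ns As B T IH Bt IHb P e c k t Et. destruct t as [| |t1 t2|t1 t2| |]; simpl in Et; try discriminate; try (match type of Et with context[if ?b then _ else _] => destruct b; discriminate end).
    destruct t2 as [| | | | |l]; simpl in Et; try discriminate; try (match type of Et with context[if ?b then _ else _] => destruct b; discriminate end). inversion Et; subst.
    destruct (IH (S c) k t1 eq_refl) as (D1 & E1 & T1). destruct (IHb c k l eq_refl) as (D2 & E2 & B2).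
    exists (plus (etail D1) D2). split. rewrite e, E1, E2, tail_ins, ins_plus. reflexivity.
    econstructor; eauto. rewrite P, (E1 0). rewrite ins_S_0. reflexivity. reflexivity.
  - intros G e c k ns Et. apply map_eq_nil in Et. subst. exists emp. split. rewrite e, ins_emp; reflexivity.
    constructor; reflexivity.
  - intros G G1 G2 n ns A As T IH Bt IHb e c k ns0 Et. destruct ns0; simpl in Et; try discriminate; try (match type of Et with context[if ?b then _ else _] => destruct b; discriminate end).
    inversion Et; subst. destruct (IH c k r eq_refl) as (D1 & E1 & T1). destruct (IHb c k ns0 eq_refl) as (D2 & E2 & B2).
    exists (plus D1 D2). split. rewrite e, E1, E2, ins_plus. reflexivity. econstructor; eauto. reflexivity.
Qed.

Lemma lift_typed_inv : forall G c k t A, typed G (rlift c k t) A -> exists D, eqv G (ins c k D) /\ typed D t A.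
Proof. intros. eapply lift_inv_mut; eauto. Qed.
Lemma lift_btyped_inv : forall G c k ns As, btyped G (map (rlift c k) ns) As -> exists D, eqv G (ins c k D) /\ btyped D ns As.
Proof. intros. eapply lift_inv_mut; eauto. Qed.


Lemma plus4 : forall a b c d, eqv (plus (plus a b) (plus c d)) (plus (plus a c) (plus b d)).
Proof. intros a b c d i. unfold plus. pcount. Qed.
Lemma del_emp : forall d, eqv (del d emp) emp.
Proof. intros d i. unfold del, emp. destruct (i <? d); auto. Qed.

Lemma perm_nil_r : forall (l : list ty), Permutation l [] -> l = [].
Proof. intros. apply Permutation_nil. apply Permutation_sym; auto. Qed.

Lemma btyped_nil_inv : forall D ns, btyped D ns [] -> ns = [] /\ eqv D emp.
Proof. intros D ns H. inversion H; subst. auto. Qed.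

Lemma subst_typed_mut :
  (forall Gm m B, typed Gm m B -> forall d ns As D, btyped D ns As -> Permutation As (Gm d) ->
     exists ns' m', Permutation ns ns' /\ lsub d 0 m ns' m' /\ typed (plus (del d Gm) (ins 0 d D)) m' B) /\
  (forall Gm ms Bs, btyped Gm ms Bs -> forall d ns As D, btyped D ns As -> Permutation As (Gm d) ->
     exists ns' ms', Permutation ns ns' /\ lsubs d 0 ms ns' ms' /\ btyped (plus (del d Gm) (ins 0 d D)) ms' Bs).
Proof.
  apply (tb_mut
    (fun Gm m B _ => forall d ns As D, btyped D ns As -> Permutation As (Gm d) ->
     exists ns' m', Permutation ns ns' /\ lsub d 0 m ns' m' /\ typed (plus (del d Gm) (ins 0 d D)) m' B)
    (fun Gm ms Bs _ => forall d ns As D, btyped D ns As -> Permutation As (Gm d) ->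
     exists ns' ms', Permutation ns ns' /\ lsubs d 0 ms ns' ms' /\ btyped (plus (del d Gm) (ins 0 d D)) ms' Bs)).
  -
    intros G i A e d ns As D Hb HP.
    pose proof (Permutation_trans HP (e d)) as HP2. unfold single in HP2.
    destruct (Nat.eqb_spec d i).
    + subst i. destruct (btyped_perm_ty _ _ HP2 _ _ Hb) as (ns'' & Pn & B1).
      inversion B1 as [|G' Ga Gb n ns0 A0 As0 Ht Hbt He]; subst.
      apply btyped_nil_inv in Hbt. destruct Hbt as [-> Hgb].
      exists [n], (rlift 0 d n). split; auto. split. constructor.
      rewrite e, del_single_eq, emp_plus, He, Hgb, plus_emp. apply lift_typed; auto.
    + apply perm_nil_r in HP2. subst As. apply btyped_nil_inv in Hb. destruct Hb as [-> HD].
      destruct (Nat.lt_ge_cases i d).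
      * exists [], (rvar i). split; auto. split. constructor; auto.
        constructor. rewrite e, HD, ins_emp, plus_emp, del_single_lt; auto. reflexivity.
      * exists [], (rvar (i - 1 + 0)). split; auto. split. constructor; lia.
        constructor. rewrite e, HD, ins_emp, plus_emp, del_single_gt by lia. rewrite Nat.add_0_r. reflexivity.
  -
    intros G D0 m As' B T IH P e d ns As D Hb HP.
    destruct (IH (S d) ns As D Hb) as (ns' & m0' & Pn & L & T').
    { eapply Permutation_trans. apply HP. apply Permutation_sym. apply (e d). }
    exists ns', (rlam m0'). split; auto. split. constructor; auto.
    econstructor. apply T'. unfold plus, del, ins; simpl. rewrite app_nil_r; auto.
    rewrite tail_sub, e. reflexivity.
  -
    intros G G1 G2 m ns0 As0 As0' B T IH Bt IHb P0 e d ns As D Hb HP.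
    pose proof (Permutation_trans HP (e d)) as HP2. unfold plus in HP2.
    destruct (btyped_perm_ty _ _ HP2 _ _ Hb) as (ns'' & Pn & B1).
    destruct (btyped_split _ _ _ _ B1) as (ns1 & ns2 & Da & Db & -> & B1a & B1b & HD).
    destruct (IH d ns1 _ Da B1a (Permutation_refl _)) as (ns1' & m' & P1 & L1 & T1).
    destruct (IHb d ns2 _ Db B1b (Permutation_refl _)) as (ns2' & ms' & P2 & L2 & T2).
    exists (ns1' ++ ns2'), (rapp m' (rbag ms')). split.
    eapply Permutation_trans; eauto. apply Permutation_app; auto.
    split. constructor; auto. constructor; auto.
    econstructor; eauto. rewrite e, HD, del_plus, ins_plus, plus4. reflexivity.
  -
    intros G G1 G2 m ns0 As0 B T IH Bt IHb P0 e d ns As D Hb HP.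
    pose proof (Permutation_trans HP (e d)) as HP2. unfold plus, etail in HP2.
    destruct (btyped_perm_ty _ _ HP2 _ _ Hb) as (ns'' & Pn & B1).
    destruct (btyped_split _ _ _ _ B1) as (ns1 & ns2 & Da & Db & -> & B1a & B1b & HD).
    destruct (IH (S d) ns1 _ Da B1a (Permutation_refl _)) as (ns1' & m' & P1 & L1 & T1).
    destruct (IHb d ns2 _ Db B1b (Permutation_refl _)) as (ns2' & ms' & P2 & L2 & T2).
    exists (ns1' ++ ns2'), (res m' (rbag ms')). split.
    eapply Permutation_trans; eauto. apply Permutation_app; auto.
    split. constructor; auto. constructor; auto.
    econstructor; eauto. unfold plus, del, ins; simpl. rewrite app_nil_r; auto.
    rewrite tail_sub, e, HD, del_plus, ins_plus, plus4. reflexivity.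
  -
    intros G e d ns As D Hb HP.
    pose proof (Permutation_trans HP (e d)) as HP2. apply perm_nil_r in HP2. subst As.
    apply btyped_nil_inv in Hb. destruct Hb as [-> HD].
    exists [], []. split; auto. split. constructor. constructor.
    rewrite e, HD, del_emp, ins_emp, plus_emp. reflexivity.
  -
    intros G G1 G2 n ns0 A As0 T IH Bt IHb e d ns As D Hb HP.
    pose proof (Permutation_trans HP (e d)) as HP2. unfold plus in HP2.
    destruct (btyped_perm_ty _ _ HP2 _ _ Hb) as (ns'' & Pn & B1).
    destruct (btyped_split _ _ _ _ B1) as (ns1 & ns2 & Da & Db & -> & B1a & B1b & HD).
    destruct (IH d ns1 _ Da B1a (Permutation_refl _)) as (ns1' & m' & P1 & L1 & T1).
    destruct (IHb d ns2 _ Db B1b (Permutation_refl _)) as (ns2' & ms' & P2 & L2 & T2).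
    exists (ns1' ++ ns2'), (m' :: ms'). split.
    eapply Permutation_trans; eauto. apply Permutation_app; auto.
    split. constructor; auto.
    econstructor; eauto. rewrite e, HD, del_plus, ins_plus, plus4. reflexivity.
Qed.

Lemma subst_typed : forall Gm m B d ns As D, typed Gm m B -> btyped D ns As -> Permutation As (Gm d) ->
  exists ns' m', Permutation ns ns' /\ lsub d 0 m ns' m' /\ typed (plus (del d Gm) (ins 0 d D)) m' B.
Proof. intros. eapply subst_typed_mut; eauto. Qed.


Inductive R : rterm -> Prop :=
| R_var i : R (rvar i)
| R_lam m : R m -> R (rlam m)
| R_app m ns : R m -> (forall n, In n ns -> R n) -> R (rapp m (rbag ns))
| R_es m ns : R m -> (forall n, In n ns -> R n) -> R (res m (rbag ns)).

Scheme lsub_mut := Induction for lsub Sort Prop with lsubs_mut := Induction for lsubs Sort Prop.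
Combined Scheme ls_cmut from lsub_mut, lsubs_mut.

Definition ASt (d K : nat) (m : rterm) (ns : list rterm) (m' : rterm) : Prop :=
  K = 0 ->
  (R m -> forall G B, typed G m' B -> exists Gm D, typed Gm m B /\ btyped D ns (Gm d) /\
      eqv G (plus (del d Gm) (ins 0 d D))) /\
  (forall ms, m = rbag ms -> (forall x, In x ms -> R x) -> forall G Bs ms', m' = rbag ms' -> btyped G ms' Bs ->
      exists Gm D, btyped Gm ms Bs /\ btyped D ns (Gm d) /\ eqv G (plus (del d Gm) (ins 0 d D))).
Definition ASb (d K : nat) (ms : list rterm) (ns : list rterm) (ms' : list rterm) : Prop :=
  K = 0 -> (forall x, In x ms -> R x) -> forall G Bs, btyped G ms' Bs ->
      exists Gm D, btyped Gm ms Bs /\ btyped D ns (Gm d) /\ eqv G (plus (del d Gm) (ins 0 d D)).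

Lemma antisubst_mut :
  (forall d K m ns m', lsub d K m ns m' -> ASt d K m ns m') /\
  (forall d K ms ns ms', lsubs d K ms ns ms' -> ASb d K ms ns ms').
Proof.
  apply (ls_cmut (fun d K m ns m' _ => ASt d K m ns m') (fun d K ms ns ms' _ => ASb d K ms ns ms'));
  unfold ASt, ASb.
  - intros d K i Hi HK. split; [|intros; discriminate].
    intros _ G B T. inversion T as [G' i' A' He| | |]; subst.
    exists (single i B), emp. split. constructor; reflexivity. split.
    unfold single. destruct (Nat.eqb_spec d i); [lia|]. constructor; reflexivity.
    rewrite He, del_single_lt, ins_emp, plus_emp by auto. reflexivity.
  - intros d K n HK. split; [|intros; discriminate].
    intros _ G B T. destruct (lift_typed_inv _ _ _ _ _ T) as (Dn & E & Tn).
    exists (single d B), Dn. split. constructor; reflexivity. split.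
    unfold single. rewrite Nat.eqb_refl. econstructor; eauto. constructor; reflexivity.
    rewrite plus_emp; reflexivity.
    rewrite E, del_single_eq, emp_plus. reflexivity.
  - intros d K i Hi HK. subst K. split; [|intros; discriminate].
    intros _ G B T. inversion T as [G' i' A' He| | |]; subst.
    exists (single i B), emp. split. constructor; reflexivity. split.
    unfold single. destruct (Nat.eqb_spec d i); [lia|]. constructor; reflexivity.
    rewrite He, del_single_gt, ins_emp, plus_emp, Nat.add_0_r by auto. reflexivity.
  - intros d K m ns m' l IH HK. split; [|intros; discriminate].
    intros Hr G A T. inversion Hr; subst. inversion T as [|G' D' m0 As B T' P' e| |]; subst.
    destruct (proj1 (IH eq_refl) H0 _ _ T') as (Gm0 & Dn & Tm & Bn & E).
    exists (etail Gm0), Dn. split; [|split].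
    + econstructor; eauto. pose proof (E 0) as E0. unfold plus, del, ins in E0; simpl in E0.
      rewrite app_nil_r in E0. eapply Permutation_trans. apply Permutation_sym, E0. auto. reflexivity.
    + exact Bn.
    + rewrite <- e, E, tail_sub. reflexivity.
  - intros d K m n ns1 ns2 m' n' l1 IH1 l2 IH2 HK. split; [|intros; discriminate].
    intros Hr G A T. inversion Hr; subst.
    inversion T as [|? ? ? ? ? ? |G' G1 G2 m0 ms' As As' B T1 B2 P e|]; subst.
    destruct (proj1 (IH1 eq_refl) H1 _ _ T1) as (Gm1 & D1 & Tm1 & Bn1 & E1).
    destruct (proj2 (IH2 eq_refl) ns eq_refl H2 _ _ ms' eq_refl B2) as (Gm2 & D2 & Tm2 & Bn2 & E2).
    exists (plus Gm1 Gm2), (plus D1 D2). split; [|split].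
    + econstructor; eauto. reflexivity.
    + apply btyped_app; auto.
    + rewrite e, E1, E2, del_plus, ins_plus, plus4. reflexivity.
  - intros d K m n ns1 ns2 m' n' l1 IH1 l2 IH2 HK. split; [|intros; discriminate].
    intros Hr G A T. inversion Hr; subst.
    inversion T as [| | |G' G1 G2 m0 ms' As B T1 B2 P e]; subst.
    destruct (proj1 (IH1 eq_refl) H1 _ _ T1) as (Gm1 & D1 & Tm1 & Bn1 & E1).
    destruct (proj2 (IH2 eq_refl) ns eq_refl H2 _ _ ms' eq_refl B2) as (Gm2 & D2 & Tm2 & Bn2 & E2).
    exists (plus (etail Gm1) Gm2), (plus D1 D2). split; [|split].
    + econstructor; eauto. pose proof (E1 0) as E0. unfold plus, del, ins in E0; simpl in E0.
      rewrite app_nil_r in E0. eapply Permutation_trans; eauto. reflexivity.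
    + apply btyped_app; auto.
    + rewrite e, E1, E2, tail_sub, del_plus, ins_plus, plus4. reflexivity.
  - intros d K m ns m' l IH HK. split; [intros Hr; inversion Hr|intros; discriminate].
  - intros d K ms ns ms' l IH HK. split; [intros Hr; inversion Hr|].
    intros ms0 E0 Hall G Bs ms'' E1 B. inversion E0; inversion E1; subst. apply IH; auto.
  - intros d K HK Hall G Bs B. inversion B as [G' He|]; subst.
    exists emp, emp. split. constructor; reflexivity. split. constructor; reflexivity.
    rewrite He, del_emp, ins_emp, plus_emp. reflexivity.
  - intros d K m ms ns1 ns2 m' ms' l IH ls IHs HK Hall G Bs B.
    inversion B as [|G' G1 G2 n0 ns0 A As T1 B2 e]; subst.
    destruct (proj1 (IH eq_refl) (Hall m (or_introl eq_refl)) _ _ T1) as (Gm1 & D1 & Tm1 & Bn1 & E1).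
    destruct (IHs eq_refl (fun x Hx => Hall x (or_intror Hx)) _ _ B2) as (Gm2 & D2 & Tm2 & Bn2 & E2).
    exists (plus Gm1 Gm2), (plus D1 D2). split; [|split].
    + econstructor; eauto. reflexivity.
    + apply btyped_app; auto.
    + rewrite e, E1, E2, del_plus, ins_plus, plus4. reflexivity.
Qed.

Lemma antisubst : forall m ns m' G B, lsub 0 0 m ns m' -> R m -> typed G m' B ->
  exists Gm D, typed Gm m B /\ btyped D ns (Gm 0) /\ eqv G (plus (etail Gm) D).
Proof. intros. destruct (proj1 ((proj1 antisubst_mut) _ _ _ _ _ H eq_refl) H0 _ _ H1) as (Gm & D & T & Bn & E).
  exists Gm, D; repeat split; auto. rewrite E, del0, ins00. reflexivity. Qed.


Lemma rlift_01 : forall (l : list rterm) n, rlift 0 (length l) (rlift 0 1 n) = rlift 0 (S (length l)) n.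
Proof. intros. rewrite rlift_comp by lia. reflexivity. Qed.

Lemma se_beta : forall l G A m n, typed G (rplug l (res m (rlift 0 (length l) n))) A ->
  typed G (rapp (rplug l (rlam m)) n) A.
Proof. induction l as [|b l IH]; intros G A m n H; simpl in *.
  - rewrite rlift_0 in H. inversion H as [| | |G' G1 G2 m0 ns As B T Bt P e]; subst.
    econstructor. econstructor. apply T. apply Permutation_sym, P. reflexivity. apply Bt.
    apply Permutation_refl. exact e.
  - inversion H as [| | |G' G1 G2 m0 bs Bs B T1 Bt P e]; subst.
    rewrite <- rlift_01 in T1. apply IH in T1.
    destruct n as [| | | | |ns0]; simpl in T1; try (inversion T1; fail);
    try (match type of T1 with context[if ?b then _ else _] => destruct b; inversion T1 end; fail).
    inversion T1 as [|? ? ? ? ? ? |G'' G3 G4 m1 ms' Cs Cs' C T2 Bt2 P2 e2|]; subst.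
    destruct (lift_btyped_inv _ _ _ _ _ Bt2) as (D4 & E4 & B4).
    apply (ty_app G (plus (etail G3) G2) D4 _ _ Cs Cs' A); auto.
    + econstructor; eauto. eapply Permutation_trans. apply P. pose proof (e2 0) as H0. pose proof (E4 0) as H1.
      unfold plus, ins in H0, H1; simpl in H0, H1. eapply Permutation_trans. apply H0.
      eapply Permutation_trans. apply Permutation_app. apply Permutation_refl. apply H1. rewrite app_nil_r. auto.
      reflexivity.
    + rewrite e, e2. intro i. pose proof (E4 (S i)) as H1. unfold plus, etail, ins in *. simpl in H1.
      rewrite Nat.sub_0_r in H1. pcount.
Qed.

Lemma sr_beta : forall l G A m n, typed G (rapp (rplug l (rlam m)) n) A ->
  typed G (rplug l (res m (rlift 0 (length l) n))) A.
Proof. induction l as [|b l IH]; intros G A m n H; simpl in *.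
  - inversion H as [|? ? ? ? ? ? |G' G1 G2 m0 ns As As' B T1 Bt P e|]; subst.
    inversion T1 as [|G'' D m1 As0 B0 T P1 e1| |]; subst.
    rewrite rlift_0. econstructor. apply T. apply Bt. eapply Permutation_trans; eauto. apply Permutation_sym; auto.
    rewrite e, <- e1. reflexivity.
  - inversion H as [|? ? ? ? ? ? |G' G1 G2 m0 ns Cs Cs' B T1 Bt P e|]; subst.
    inversion T1 as [| | |G'' G3 G4 m1 bs Bs B0 T3 Bt3 P3 e3]; subst.
    assert (typed (plus G3 (ins 0 1 G2)) (rapp (rplug l (rlam m)) (rlift 0 1 (rbag ns))) A) as T4.
    { simpl. apply (ty_app _ G3 (ins 0 1 G2) _ _ Cs Cs' A); auto. apply lift_btyped; auto. reflexivity. }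
    apply IH in T4. rewrite rlift_01 in T4.
    econstructor. apply T4. apply Bt3. unfold plus, ins; simpl. rewrite app_nil_r. auto.
    rewrite e, e3. intro i. unfold plus, etail, ins. simpl. rewrite Nat.sub_0_r. pcount.
Qed.

Lemma rplug_res_bag : forall l ns x, rplug l (rbag ns) = rbag x -> l = [] /\ ns = x.
Proof. destruct l; simpl; intros; inversion H; auto. Qed.

Lemma se : forall t r, rstep t r -> forall t', r = Some t' ->
  (R t -> forall G A, typed G t' A -> typed G t A) /\
  (forall ms, t = rbag ms -> (forall x, In x ms -> R x) -> forall G As ms', t' = rbag ms' -> btyped G ms' As -> btyped G ms As).
Proof. induction 1; intros t' Et.
  - split; [|intros ms Em; destruct H; discriminate].
    intros Hr G A T. destruct H; inversion Et; subst.
    + inversion Hr.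
    + apply se_beta; auto.
    + inversion Hr as [| | |m0 ns0 Hm Hns]; subst.
      destruct (rplug_res_bag _ _ _ (eq_sym H2)) as [-> ->]. simpl in *.
      destruct (antisubst _ _ _ _ _ H0 Hm T) as (Gm & D & Tm & Bn & E).
      destruct (btyped_perm_tm _ _ (Permutation_sym H) _ _ Bn) as (As' & P' & B').
      econstructor; eauto. apply Permutation_sym; auto.
  - destruct (option_map_some _ _ _ Et) as (x & -> & ->). split; [|intros; discriminate].
    intros Hr G A T. inversion Hr; subst. inversion T as [|G' D m1 As B T1 P e| |]; subst.
    econstructor; eauto. eapply (proj1 (IHrstep x eq_refl)); eauto.
  - destruct (option_map_some _ _ _ Et) as (x & -> & ->). split; [|intros; discriminate].
    intros Hr G A T. inversion Hr; subst. inversion T as [|? ? ? ? ? ? |G' G1 G2 m1 ms As As' B T1 Bt P e|]; subst.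
    econstructor; eauto. eapply (proj1 (IHrstep x eq_refl)); eauto.
  - destruct (option_map_some _ _ _ Et) as (x & -> & ->). split; [|intros; discriminate].
    intros Hr G A T. inversion Hr; subst. inversion T as [|? ? ? ? ? ? |G' G1 G2 m1 ms As As' B T1 Bt P e|]; subst.
    econstructor; eauto. eapply (proj2 (IHrstep _ eq_refl)); eauto.
  - destruct (option_map_some _ _ _ Et) as (x & -> & ->). split; [|intros; discriminate].
    intros Hr G A T. inversion Hr; subst. inversion T as [| | |G' G1 G2 m1 ms As B T1 Bt P e]; subst.
    econstructor; eauto. eapply (proj1 (IHrstep x eq_refl)); eauto.
  - destruct (option_map_some _ _ _ Et) as (x & -> & ->). split; [|intros; discriminate].
    intros Hr G A T. inversion Hr; subst. inversion T as [| | |G' G1 G2 m1 ms As B T1 Bt P e]; subst.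
    econstructor; eauto. eapply (proj2 (IHrstep _ eq_refl)); eauto.
  - destruct (option_map_some _ _ _ Et) as (x & -> & ->). split; [intros Hr; inversion Hr|intros; discriminate].
  - destruct (option_map_some _ _ _ Et) as (x & -> & ->). split; [intros Hr; inversion Hr|].
    intros ms Em Hall G As ms' Em' B. inversion Em; inversion Em'; subst.
    destruct (btyped_in _ _ _ _ _ B) as (Gx & A0 & Tx & F). apply F.
    eapply (proj1 (IHrstep x eq_refl)); eauto. apply Hall. apply in_or_app; right; left; auto.
Qed.

Lemma sr : forall t r, rstep t r ->
  (forall G A, typed G t A -> exists t', rstep t (Some t') /\ typed G t' A) /\
  (forall ms G As, t = rbag ms -> btyped G ms As -> exists ms', rstep t (Some (rbag ms')) /\ btyped G ms' As).
Proof. induction 1.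
  - split; [|intros ms G As Em; destruct H; discriminate].
    intros G A T. destruct H.
    + inversion T.
    + inversion T.
    + eexists; split. apply rs_base, r_beta. apply sr_beta; auto.
    + destruct l; simpl in *; [|inversion T].
      inversion T as [| | |G' G1 G2 m0 ns0 As B T1 Bt P e]; subst.
      destruct (subst_typed _ _ _ _ _ _ _ T1 Bt P) as (ns2 & m2 & Pn & L & T2).
      exists m2; split. apply rs_base. apply (r_subst [] m ns ns2 m2); auto.
      rewrite e. rewrite del0, ins00 in T2. auto.
    + destruct l; simpl in *; [|inversion T].
      inversion T as [| | |G' G1 G2 m0 ns0 As B T1 Bt P e]; subst.
      destruct (subst_typed _ _ _ _ _ _ _ T1 Bt P) as (ns2 & m2 & Pn & L & T2).
      exists m2; split. apply rs_base. apply (r_subst [] m ns ns2 m2); auto.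
      rewrite e. rewrite del0, ins00 in T2. auto.
  - split; [|intros; discriminate]. intros G A T.
    inversion T as [|G' D m1 As B T1 P e| |]; subst.
    destruct (proj1 IHrstep _ _ T1) as (x & S1 & T2).
    exists (rlam x); split. exact (rs_lam _ _ S1). econstructor; eauto.
  - split; [|intros; discriminate]. intros G A T.
    inversion T as [|? ? ? ? ? ? |G' G1 G2 m1 ms As As' B T1 Bt P e|]; subst.
    destruct (proj1 IHrstep _ _ T1) as (x & S1 & T2).
    exists (rapp x (rbag ms)); split. exact (rs_appl _ _ _ S1). econstructor; eauto.
  - split; [|intros; discriminate]. intros G A T.
    inversion T as [|? ? ? ? ? ? |G' G1 G2 m1 ms As As' B T1 Bt P e|]; subst.
    destruct (proj2 IHrstep _ _ _ eq_refl Bt) as (x & S1 & T2).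
    exists (rapp m (rbag x)); split. exact (rs_appr _ _ _ S1). econstructor; eauto.
  - split; [|intros; discriminate]. intros G A T.
    inversion T as [| | |G' G1 G2 m1 ms As B T1 Bt P e]; subst.
    destruct (proj1 IHrstep _ _ T1) as (x & S1 & T2).
    exists (res x (rbag ms)); split. exact (rs_esl _ _ _ S1). econstructor; eauto.
  - split; [|intros; discriminate]. intros G A T.
    inversion T as [| | |G' G1 G2 m1 ms As B T1 Bt P e]; subst.
    destruct (proj2 IHrstep _ _ _ eq_refl Bt) as (x & S1 & T2).
    exists (res m (rbag x)); split. exact (rs_esr _ _ _ S1). econstructor; eauto.
  - split; [intros G A T; inversion T|intros; discriminate].
  - split; [intros G A T; inversion T|].
    intros ms G As Em B. inversion Em; subst.
    destruct (btyped_in _ _ _ _ _ B) as (Gx & A0 & Tx & F).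
    destruct (proj1 IHrstep _ _ Tx) as (x & S1 & T2).
    exists (ms1 ++ x :: ms2); split. exact (rs_bag _ _ _ _ S1). apply F; auto.
Qed.


Lemma R_lift : forall t, R t -> forall c k, R (rlift c k t).
Proof. induction 1; intros; simpl.
  - destruct (i <? c); constructor.
  - constructor; auto.
  - constructor; auto. intros y Hy. apply in_map_iff in Hy. destruct Hy as (x & <- & Hx). auto.
  - constructor; auto. intros y Hy. apply in_map_iff in Hy. destruct Hy as (x & <- & Hx). auto. Qed.

Definition allR (l : list rterm) := forall x, In x l -> R x.

Lemma allR_app : forall a b, allR (a ++ b) <-> allR a /\ allR b.
Proof. unfold allR; split. intros H; split; intros; apply H; apply in_or_app; auto.
  intros [A B] x Hx. apply in_app_or in Hx. destruct Hx; auto. Qed.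

Lemma R_lsub_mut :
  (forall d K m ns m', lsub d K m ns m' -> allR ns ->
     (R m -> R m') /\ (forall ms, m = rbag ms -> allR ms -> exists ms', m' = rbag ms' /\ allR ms')) /\
  (forall d K ms ns ms', lsubs d K ms ns ms' -> allR ns -> allR ms -> allR ms').
Proof.
  apply (ls_cmut (fun d K m ns m' _ => allR ns ->
     (R m -> R m') /\ (forall ms, m = rbag ms -> allR ms -> exists ms', m' = rbag ms' /\ allR ms'))
     (fun d K ms ns ms' _ => allR ns -> allR ms -> allR ms')).
  - intros. split; [constructor|intros; discriminate].
  - intros. split; [|intros; discriminate]. intros. apply R_lift. apply H. left; auto.
  - intros. split; [constructor|intros; discriminate].
  - intros d K m ns m' l IH Hn. split; [|intros; discriminate]. intros Hr; inversion Hr; subst.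
    constructor. apply IH; auto.
  - intros d K m n ns1 ns2 m' n' l1 IH1 l2 IH2 Hn. apply allR_app in Hn. destruct Hn as [Hn1 Hn2].
    split; [|intros; discriminate]. intros Hr; inversion Hr; subst.
    destruct (proj2 (IH2 Hn2) ns eq_refl H2) as (ms' & -> & Hms). constructor; auto. apply IH1; auto.
  - intros d K m n ns1 ns2 m' n' l1 IH1 l2 IH2 Hn. apply allR_app in Hn. destruct Hn as [Hn1 Hn2].
    split; [|intros; discriminate]. intros Hr; inversion Hr; subst.
    destruct (proj2 (IH2 Hn2) ns eq_refl H2) as (ms' & -> & Hms). constructor; auto. apply IH1; auto.
  - intros. split; [intros Hr; inversion Hr|intros; discriminate].
  - intros d K ms ns ms' l IH Hn. split; [intros Hr; inversion Hr|].
    intros ms0 E Hm. inversion E; subst. exists ms'; split; auto.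
  - intros. intros x [].
  - intros d K m ms ns1 ns2 m' ms' l IH ls IHs Hn Hm. apply allR_app in Hn. destruct Hn as [Hn1 Hn2].
    intros x [<- | Hx]. apply IH; auto. apply Hm; left; auto. apply IHs; auto. intros y Hy; apply Hm; right; auto.
Qed.

Lemma R_rplug_inv : forall l X, R (rplug l X) -> R X /\ Forall (fun b => exists bs, b = rbag bs /\ allR bs) l.
Proof. induction l; intros X H; simpl in *. split; auto.
  inversion H; subst. destruct (IHl _ H2). split; auto. constructor; auto. exists ns; auto. Qed.
Lemma R_rplug : forall l X, Forall (fun b => exists bs, b = rbag bs /\ allR bs) l -> R X -> R (rplug l X).
Proof. induction 1; intros; simpl; auto. destruct H as (bs & -> & H). constructor; auto. Qed.

Lemma R_pres : forall t r, rstep t r -> forall t', r = Some t' ->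
  (R t -> R t') /\ (forall ms, t = rbag ms -> allR ms -> exists ms', t' = rbag ms' /\ allR ms').
Proof. induction 1; intros t' Et.
  - split; [|intros ms Em; destruct H; discriminate]. intros Hr. destruct H; inversion Et; subst.
    + inversion Hr.
    + inversion Hr; subst. destruct (R_rplug_inv _ _ H1) as [Hl F]. inversion Hl; subst.
      apply R_rplug; auto. simpl. constructor; auto. intros y Hy. apply in_map_iff in Hy.
      destruct Hy as (x & <- & Hx). apply R_lift; auto.
    + inversion Hr; subst. destruct (rplug_res_bag _ _ _ (eq_sym H2)) as [-> ->]. simpl in *.
      apply (proj1 R_lsub_mut _ _ _ _ _ H0); auto. intros y Hy. apply H4. eapply Permutation_in.
      apply Permutation_sym; eauto. auto.
  - destruct (option_map_some _ _ _ Et) as (x & -> & ->). split; [|intros; discriminate].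
    intros Hr; inversion Hr; subst. constructor. apply (IHrstep x eq_refl); auto.
  - destruct (option_map_some _ _ _ Et) as (x & -> & ->). split; [|intros; discriminate].
    intros Hr; inversion Hr; subst. constructor; auto. apply (IHrstep x eq_refl); auto.
  - destruct (option_map_some _ _ _ Et) as (x & -> & ->). split; [|intros; discriminate].
    intros Hr; inversion Hr; subst. destruct (proj2 (IHrstep x eq_refl) ns eq_refl H3) as (ms' & -> & Hm).
    constructor; auto.
  - destruct (option_map_some _ _ _ Et) as (x & -> & ->). split; [|intros; discriminate].
    intros Hr; inversion Hr; subst. constructor; auto. apply (IHrstep x eq_refl); auto.
  - destruct (option_map_some _ _ _ Et) as (x & -> & ->). split; [|intros; discriminate].
    intros Hr; inversion Hr; subst. destruct (proj2 (IHrstep x eq_refl) ns eq_refl H3) as (ms' & -> & Hm).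
    constructor; auto.
  - destruct (option_map_some _ _ _ Et) as (x & -> & ->). split; [intros Hr; inversion Hr|intros; discriminate].
  - destruct (option_map_some _ _ _ Et) as (x & -> & ->). split; [intros Hr; inversion Hr|].
    intros ms E Hm. inversion E; subst. exists (ms1 ++ x :: ms2); split; auto.
    intros y Hy. apply in_app_or in Hy. destruct Hy as [Hy|[<-|Hy]].
    + apply Hm, in_or_app; auto.
    + apply (IHrstep x eq_refl). apply Hm, in_or_app; right; left; auto.
    + apply Hm, in_or_app; right; right; auto.
Qed.

Lemma taylor_R : forall m M, taylor m M -> R m.
Proof. induction 1; constructor; auto. Qed.

Lemma se_steps : forall t t', rsteps t t' -> R t -> forall G A, typed G t' A -> typed G t A.
Proof. intros t t' H. apply clos_rt_rt1n in H. induction H; intros Hr G A T; auto.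
  assert (R y) as Hy by (apply (R_pres _ _ H y eq_refl); auto).
  apply (se _ _ H y eq_refl); auto. Qed.

Fixpoint size (t : rterm) : nat :=
  match t with
  | rvar _ => 1
  | rlam m => S (size m)
  | rapp m n => S (size m + size n)
  | res m n => S (size m + size n)
  | rder m => S (size m)
  | rbag ts => S (list_sum (map size ts))
  end.

Lemma sum_app : forall a b, list_sum (map size (a ++ b)) = list_sum (map size a) + list_sum (map size b).
Proof. induction a; intros; simpl; auto. rewrite IHa. lia. Qed.

Lemma size_lift : forall t c k, size (rlift c k t) = size t.
Proof. induction t using rterm_ind2; intros; simpl; auto.
  all: try (destruct (i <? c); reflexivity).
  all: try (f_equal; induction H; simpl; auto; rewrite H, IHForall; auto).
Qed.

Lemma size_lsub_mut :
  (forall d K m ns m', lsub d K m ns m' -> size m' + length ns = size m + list_sum (map size ns)) /\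
  (forall d K ms ns ms', lsubs d K ms ns ms' ->
      list_sum (map size ms') + length ns = list_sum (map size ms) + list_sum (map size ns)).
Proof.
  apply (ls_cmut (fun d K m ns m' _ => size m' + length ns = size m + list_sum (map size ns))
                 (fun d K ms ns ms' _ => list_sum (map size ms') + length ns = list_sum (map size ms) + list_sum (map size ns)));
  intros; simpl in *; rewrite ?length_app, ?sum_app in *; try rewrite size_lift; try lia.
Qed.

Lemma size_rplug : forall l X, size (rplug l X) = size X + list_sum (map (fun b => S (size b)) l).
Proof. induction l; intros; simpl; auto. rewrite IHl. lia. Qed.

Lemma sum_perm : forall a b, Permutation a b -> list_sum (map size a) = list_sum (map size b).
Proof. induction 1; simpl; lia. Qed.

Lemma size_step : forall t r, rstep t r -> forall t', r = Some t' -> size t' < size t.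
Proof. induction 1; intros t' Et.
  - destruct H; inversion Et; subst; simpl; rewrite ?size_rplug; simpl; try rewrite size_lift; try lia.
    pose proof (proj1 size_lsub_mut _ _ _ _ _ H0). rewrite (sum_perm _ _ H). lia.
  - destruct (option_map_some _ _ _ Et) as (x & -> & ->). specialize (IHrstep x eq_refl). simpl; lia.
  - destruct (option_map_some _ _ _ Et) as (x & -> & ->). specialize (IHrstep x eq_refl). simpl; lia.
  - destruct (option_map_some _ _ _ Et) as (x & -> & ->). specialize (IHrstep x eq_refl). simpl; lia.
  - destruct (option_map_some _ _ _ Et) as (x & -> & ->). specialize (IHrstep x eq_refl). simpl; lia.
  - destruct (option_map_some _ _ _ Et) as (x & -> & ->). specialize (IHrstep x eq_refl). simpl; lia.
  - destruct (option_map_some _ _ _ Et) as (x & -> & ->). specialize (IHrstep x eq_refl). simpl; lia.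
  - destruct (option_map_some _ _ _ Et) as (x & -> & ->). specialize (IHrstep x eq_refl). simpl.
    rewrite !sum_app. simpl. lia.
Qed.

Lemma norm : forall n t G A, size t < n -> typed G t A -> exists p, rnormal p /\ rsteps t p.
Proof. induction n; intros t G A Hs T. lia.
  destruct (classic (rnormal t)) as [Hn|Hn].
  - exists t; split; auto. apply rt_refl.
  - unfold rnormal in Hn. apply not_all_not_ex in Hn. destruct Hn as (r & Hr).
    destruct (proj1 (sr _ _ Hr) _ _ T) as (t' & S1 & T1).
    pose proof (size_step _ _ S1 t' eq_refl).
    destruct (IHn t' G A ltac:(lia) T1) as (p & Hp & Rp).
    exists p; split; auto. eapply rt_trans. apply rt_step; eauto. auto.
Qed.

Lemma subterm : forall T M m G A, taylor m (plugT T M) -> typed G m A ->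
  exists m0 G0 A0, taylor m0 M /\ typed G0 m0 A0.
Proof. induction T; intros M m G A Ht Ty; simpl in Ht.
  - eauto.
  - inversion Ht; subst. inversion Ty as [|? ? ? ? ? ? |G' G1 G2 m1 ms As As' B T1 Bt P e|]; subst. eauto.
  - inversion Ht; subst. inversion Ty as [|? ? ? ? ? ? |G' G1 G2 m1 ms As As' B T1 Bt P e|]; subst.
    match goal with H : taylor ?a (Lam _) |- _ => inversion H; subst end.
    inversion T1 as [|G'' D m2 As0 B0 T2 P2 e2| |]; subst. eauto.
Qed.

Theorem direction_right : forall M, meaningful M -> exists p, nf_taylor M p.
Proof. intros M (T & H).
  destruct (anti_sims _ _ H (rlam (rvar 0)) (t_lam _ _ (t_var 0))) as (m & Tm & Rm).
  assert (typed emp (rlam (rvar 0)) (Arr [Star] Star)) as T0.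
  { apply (ty_lam emp (single 0 Star) (rvar 0) [Star] Star). constructor; reflexivity.
    apply Permutation_refl. intro i. unfold etail, single, emp. simpl. auto. }
  pose proof (se_steps _ _ Rm (taylor_R _ _ Tm) _ _ T0) as Ty.
  destruct (subterm _ _ _ _ _ Tm Ty) as (m0 & G0 & A0 & Tm0 & Ty0).
  destruct (norm (S (size m0)) m0 G0 A0 ltac:(lia) Ty0) as (p & Hp & Rp).
  exists p. split; auto. exists m0; split; auto. Qed.

Theorem mainTheorem12 (M : term) :
  meaningful M <-> exists p : rterm, nf_taylor M p.
Proof. split. apply direction_right. apply direction_left. Qed.
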